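(* Let $V$ be a real symmetric positive-definite $N\times N$ matrix and $\alpha>0$. Then: 1) $L_-$ and its orthogonal complement $L_0$ in $\mathbb R^{2N}$ are invariant under $A$; 2) the spectrum of the restriction $A_-$ of $A$ to $L_-$ lies in the open left half-plane, $\|e^{tA_-}\|\to0$ exponentially fast as $t\to\infty$, and $$L_-=\{\psi\in\mathbb R^{2N}: H(e^{tA}\psi)\to0\text{ as }t\to\infty\}.$$
   Context: $\psi=(q,p)\in\mathbb R^{2N}$, $H(\psi)=\frac12\sum_ip_i^2+\frac12\sum_{i,j}V(i,j)q_iq_j$. $A=\begin{pmatrix}0&E\\-V&-\alpha D\end{pmatrix}$, where $E$ is the $N\times N$ identity and $D$ is the diagonal $N\times N$ matrix with $D_{11}=1$ and all other entries $0$ (damping acting on $p_1$ only). $l_V$ is the span of $V^ke_1$, $k\ge0$ ($e_1$ the first standard basis vector of $\mathbb R^N$), and $L_-=\{(q,p):q,p\in l_V\}$. *)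

(* Defs.v *)
(* real analysis (exponentials, limits) needs Stdlib Reals.
   Vectors of R^N are functions nat -> R, only indices 0..N-1 are relevant.
   Index 0 plays the role of the paper's index 1 (e_1, D_11, p_1). *)
From Stdlib Require Import Reals Factorial.
Open Scope R_scope.

Definition vec := nat -> R.
(* a phase-space vector psi = (q, p) in R^(2N) *)
Definition state := (vec * vec)%type.

Fixpoint rsum (n : nat) (f : nat -> R) : R :=
  match n with O => 0 | S k => rsum k f + f k end.

Definition dot (N : nat) (x y : vec) : R := rsum N (fun i => x i * y i).

Definition matvec (N : nat) (M : nat -> nat -> R) (x : vec) : vec :=
  fun i => rsum N (fun j => M i j * x j).

Definition symmetric (N : nat) (M : nat -> nat -> R) : Prop :=
  forall i j, (i < N)%nat -> (j < N)%nat -> M i j = M j i.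

Definition nonzero_vec (N : nat) (x : vec) : Prop :=
  exists i, (i < N)%nat /\ x i <> 0.

Definition pos_def (N : nat) (M : nat -> nat -> R) : Prop :=
  forall x, nonzero_vec N x -> dot N x (matvec N M x) > 0.

Definition e1 : vec := fun i => if Nat.eqb i 0 then 1 else 0.

Fixpoint Vke1 (N : nat) (V : nat -> nat -> R) (k : nat) : vec :=
  match k with O => e1 | S k' => matvec N V (Vke1 N V k') end.

Definition in_lV (N : nat) (V : nat -> nat -> R) (x : vec) : Prop :=
  exists (m : nat) (c : nat -> R),
    forall i, (i < N)%nat -> x i = rsum m (fun k => c k * Vke1 N V k i).

Definition in_Lminus (N : nat) (V : nat -> nat -> R) (psi : state) : Prop :=
  in_lV N V (fst psi) /\ in_lV N V (snd psi).

Definition dot2 (N : nat) (x y : state) : R :=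
  dot N (fst x) (fst y) + dot N (snd x) (snd y).

Definition norm2 (N : nat) (x : state) : R := sqrt (dot2 N x x).

Definition in_L0 (N : nat) (V : nat -> nat -> R) (psi : state) : Prop :=
  forall phi, in_Lminus N V phi -> dot2 N psi phi = 0.

(* A (q,p) = (p, -V q - alpha D p), D = diag(1,0,...,0) *)
Definition Aop (N : nat) (V : nat -> nat -> R) (alpha : R) (psi : state) : state :=
  (snd psi,
   fun i => - matvec N V (fst psi) i - (if Nat.eqb i 0 then alpha * snd psi O else 0)).

Definition Apow (N : nat) (V : nat -> nat -> R) (alpha : R) (k : nat) (psi : state)
  : state := Nat.iter k (Aop N V alpha) psi.

Definition Ham (N : nat) (V : nat -> nat -> R) (psi : state) : R :=
  / 2 * dot N (snd psi) (snd psi) + / 2 * dot N (fst psi) (matvec N V (fst psi)).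

Definition st_eq (N : nat) (x y : state) : Prop :=
  forall i, (i < N)%nat -> fst x i = fst y i /\ snd x i = snd y i.

Definition st_nonzero (N : nat) (x : state) : Prop :=
  nonzero_vec N (fst x) \/ nonzero_vec N (snd x).

Definition st_lin (a : R) (x : state) (b : R) (y : state) : state :=
  (fun i => a * fst x i + b * fst y i, fun i => a * snd x i + b * snd y i).

Definition is_expA (N : nat) (V : nat -> nat -> R) (alpha t : R) (psi phi : state)
  : Prop :=
  forall i, (i < N)%nat ->
    Un_cv (fun n => sum_f_R0 (fun k => t ^ k / INR (Factorial.fact k) * fst (Apow N V alpha k psi) i) n)
          (fst phi i) /\
    Un_cv (fun n => sum_f_R0 (fun k => t ^ k / INR (Factorial.fact k) * snd (Apow N V alpha k psi) i) n)
          (snd phi i).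

(* a + i b is an eigenvalue of the restriction A_- of A to L_- :
   there is a nonzero complex eigenvector u + i v with u, v in L_-, i.e.
   A u = a u - b v and A v = b u + a v. *)
Definition eigenvalue_Aminus (N : nat) (V : nat -> nat -> R) (alpha a b : R) : Prop :=
  exists u v : state,
    in_Lminus N V u /\ in_Lminus N V v /\ (st_nonzero N u \/ st_nonzero N v) /\
    st_eq N (Aop N V alpha u) (st_lin a u (- b) v) /\
    st_eq N (Aop N V alpha v) (st_lin b u a v).

Definition tends_to_0_at_infty (f : R -> R) : Prop :=
  forall eps, eps > 0 -> exists T, forall t, t >= T -> Rabs (f t) < eps.

(* Main.v *)
Require Import Defs.
From Stdlib Require Import Reals Psatz Lia Lra IndefiniteDescription.
Open Scope R_scope.

Lemma sq_nn x : 0 <= x * x.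
Proof. pose proof (Rle_0_sqr x). unfold Rsqr in *. lra. Qed.

Lemma rsum_ext n f g : (forall i, (i < n)%nat -> f i = g i) -> rsum n f = rsum n g.
Proof. induction n; simpl; intros H; auto. rewrite IHn by (intros; apply H; lia). rewrite H by lia. auto. Qed.

Lemma rsum_plus n f g : rsum n (fun i => f i + g i) = rsum n f + rsum n g.
Proof. induction n; simpl; [lra|]. rewrite IHn; lra. Qed.

Lemma rsum_scal n c f : rsum n (fun i => c * f i) = c * rsum n f.
Proof. induction n; simpl; [lra|]. rewrite IHn; lra. Qed.

Lemma rsum_opp n f : rsum n (fun i => - f i) = - rsum n f.
Proof. induction n; simpl; [lra|]. rewrite IHn; lra. Qed.

Lemma rsum_minus n f g : rsum n (fun i => f i - g i) = rsum n f - rsum n g.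
Proof. induction n; simpl; [lra|]. rewrite IHn; lra. Qed.

Lemma rsum_zero n f : (forall i, (i < n)%nat -> f i = 0) -> rsum n f = 0.
Proof. intros H. rewrite (rsum_ext n f (fun _ => 0)) by auto. induction n; simpl; [lra|]. rewrite IHn; [lra|]. intros; apply H; lia. Qed.

Lemma rsum_swap n m F : rsum n (fun i => rsum m (fun j => F i j)) = rsum m (fun j => rsum n (fun i => F i j)).
Proof. induction n; simpl.
- symmetry; apply rsum_zero; auto.
- rewrite IHn. rewrite <- rsum_plus. auto. Qed.

Lemma rsum_nonneg n f : (forall i, (i < n)%nat -> 0 <= f i) -> 0 <= rsum n f.
Proof. induction n; simpl; intros H; [lra|]. assert (0 <= f n) by (apply H; lia). assert (0 <= rsum n f) by (apply IHn; intros; apply H; lia). lra. Qed.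

Lemma rsum_le n f g : (forall i, (i < n)%nat -> f i <= g i) -> rsum n f <= rsum n g.
Proof. induction n; simpl; intros H; [lra|]. assert (f n <= g n) by (apply H; lia). assert (rsum n f <= rsum n g) by (apply IHn; intros; apply H; lia). lra. Qed.

Lemma rsum_shift n f : rsum (S n) f = f 0%nat + rsum n (fun j => f (S j)).
Proof. induction n; simpl in *; [lra|]. rewrite IHn. lra. Qed.

Lemma rsum_term_le n f i : (forall j, (j < n)%nat -> 0 <= f j) -> (i < n)%nat -> f i <= rsum n f.
Proof. induction n; intros H Hi; [lia|]. simpl. destruct (Nat.eq_dec i n).
- subst. assert (0 <= rsum n f) by (apply rsum_nonneg; intros; apply H; lia). lra.
- assert (f i <= rsum n f) by (apply IHn; [intros; apply H; lia| lia]). assert (0 <= f n) by (apply H; lia). lra. Qed.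

Lemma rsum_mono_n n m f : (forall j, (j < m)%nat -> 0 <= f j) -> (n <= m)%nat -> rsum n f <= rsum m f.
Proof. intros H Hnm. induction Hnm; [lra|]. simpl. assert (0 <= f m) by (apply H; lia). assert (rsum n f <= rsum m f) by (apply IHHnm; intros; apply H; lia). lra. Qed.

Lemma rsum_shift_le n s f : (forall j, (j < n + s)%nat -> 0 <= f j) -> rsum n (fun j => f (j + s)%nat) <= rsum (n + s) f.
Proof. revert f; induction s; intros f H.
- rewrite (rsum_ext n _ f) by (intros; f_equal; lia). replace (n+0)%nat with n by lia. lra.
- replace (n + S s)%nat with (S (n + s)) by lia. rewrite rsum_shift.
  rewrite (rsum_ext n _ (fun j => f (S j + s)%nat)) by (intros; f_equal; lia).
  assert (rsum n (fun j => f (S j + s)%nat) = rsum n (fun j => (fun k => f (S k)) (j + s)%nat)) by (apply rsum_ext; intros; f_equal).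
  rewrite H0. assert (rsum n (fun j => (fun k => f (S k)) (j + s)%nat) <= rsum (n+s) (fun k => f (S k))).
  { pose proof (IHs (fun k => f (S k))) as HH. simpl in HH. apply HH. intros; apply H; lia. }
  assert (0 <= f 0%nat) by (apply H; lia). lra. Qed.

Lemma rsum_delta n i f : (i < n)%nat -> rsum n (fun j => (if Nat.eqb j i then 1 else 0) * f j) = f i.
Proof. induction n; intros Hi; [lia|]. simpl. destruct (Nat.eqb_spec n i).
- subst. rewrite rsum_zero; [lra|]. intros j Hj. destruct (Nat.eqb_spec j i); [lia|lra].
- rewrite IHn by lia. lra. Qed.

Lemma rsum_delta' n i f : (i < n)%nat -> rsum n (fun j => f j * (if Nat.eqb j i then 1 else 0)) = f i.
Proof. intros. rewrite <- (rsum_delta n i f) by auto. apply rsum_ext. intros; lra. Qed.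

Lemma CS_abs A B C : 0 <= B -> (forall l, 0 <= A - 2 * l * C + l * l * B) -> C * C <= A * B.
Proof. intros HB H. destruct (Rle_lt_or_eq_dec 0 B HB) as [Hb|Hb].
- specialize (H (C / B)). replace (A - 2 * (C / B) * C + C / B * (C / B) * B) with (A - C * C / B) in H by (field; apply Rgt_not_eq; lra).
  assert (C * C / B <= A) by lra. apply Rmult_le_compat_r with (r := B) in H0; [|lra].
  replace (C * C / B * B) with (C * C) in H0 by (field; apply Rgt_not_eq; lra). lra.
- subst. destruct (Req_dec C 0). { subst. assert (0 <= A) by (specialize (H 0); lra). nra. }
  specialize (H ((A + 1) / (2 * C))). replace (A - 2 * ((A + 1) / (2 * C)) * C + (A + 1) / (2 * C) * ((A + 1) / (2 * C)) * 0) with (-1) in H by (field; auto). lra. Qed.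

Lemma rsum_CS n f g : (rsum n (fun i => f i * g i)) * (rsum n (fun i => f i * g i)) <= rsum n (fun i => f i * f i) * rsum n (fun i => g i * g i).
Proof. apply CS_abs. { apply rsum_nonneg; intros ii _; cbv beta; apply sq_nn. }
  intros l. replace (rsum n (fun i => f i * f i) - 2 * l * rsum n (fun i => f i * g i) + l * l * rsum n (fun i => g i * g i))
  with (rsum n (fun i => (f i - l * g i) * (f i - l * g i))).
  { apply rsum_nonneg; intros ii _; cbv beta; apply sq_nn. }
  rewrite (rsum_ext n _ (fun i => (f i * f i - (2 * l) * (f i * g i)) + (l * l) * (g i * g i))) by (intros; ring).
  rewrite rsum_plus, rsum_minus, !rsum_scal. ring. Qed.

Section Vec.
Variable N : nat.

Lemma dot_comm x y : dot N x y = dot N y x.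
Proof. unfold dot. apply rsum_ext; intros; ring. Qed.

Lemma dot_ext x x' y y' : (forall i, (i < N)%nat -> x i = x' i) -> (forall i, (i < N)%nat -> y i = y' i) -> dot N x y = dot N x' y'.
Proof. intros H1 H2. unfold dot. apply rsum_ext; intros. rewrite H1, H2 by auto. auto. Qed.

Lemma dot_plus_l x y z : dot N (fun i => x i + y i) z = dot N x z + dot N y z.
Proof. unfold dot. rewrite <- rsum_plus. apply rsum_ext; intros; ring. Qed.

Lemma dot_minus_l x y z : dot N (fun i => x i - y i) z = dot N x z - dot N y z.
Proof. unfold dot. rewrite <- rsum_minus. apply rsum_ext; intros; ring. Qed.

Lemma dot_scal_l c x z : dot N (fun i => c * x i) z = c * dot N x z.
Proof. unfold dot. rewrite <- rsum_scal. apply rsum_ext; intros; ring. Qed.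

Lemma dot_opp_l x z : dot N (fun i => - x i) z = - dot N x z.
Proof. unfold dot. rewrite <- rsum_opp. apply rsum_ext; intros; ring. Qed.

Lemma dot_rsum_l m c f z : dot N (fun i => rsum m (fun k => c k * f k i)) z = rsum m (fun k => c k * dot N (f k) z).
Proof. unfold dot. rewrite (rsum_ext N _ (fun i => rsum m (fun k => c k * (f k i * z i)))).
  2:{ intros. rewrite Rmult_comm, <- rsum_scal. apply rsum_ext; intros; ring. }
  rewrite rsum_swap. apply rsum_ext; intros. rewrite rsum_scal. auto. Qed.

Lemma dot_nonneg x : 0 <= dot N x x.
Proof. unfold dot. apply rsum_nonneg. intros; apply sq_nn. Qed.

Lemma dot_zero x : dot N x x = 0 -> forall i, (i < N)%nat -> x i = 0.
Proof. intros H i Hi. assert (x i * x i <= dot N x x).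
  { unfold dot. apply (rsum_term_le N (fun i => x i * x i)); auto. intros; apply sq_nn. }
  pose proof (sq_nn (x i)). assert (x i * x i = 0) by lra. apply Rmult_integral in H2. tauto. Qed.

Lemma dot_pos x : nonzero_vec N x -> 0 < dot N x x.
Proof. intros [i [Hi Hx]]. destruct (Rle_lt_or_eq_dec 0 _ (dot_nonneg x)); auto.
  exfalso. apply Hx. apply dot_zero; auto. Qed.

Lemma dot_e1 x : (1 <= N)%nat -> dot N x e1 = x 0%nat.
Proof. intros HN. unfold dot, e1. apply (rsum_delta' N 0 x). lia. Qed.

Variable V : nat -> nat -> R.

Lemma matvec_ext x y : (forall i, (i < N)%nat -> x i = y i) -> forall i, matvec N V x i = matvec N V y i.
Proof. intros H i. unfold matvec. apply rsum_ext; intros. rewrite H; auto. Qed.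

Lemma matvec_plus x y i : matvec N V (fun j => x j + y j) i = matvec N V x i + matvec N V y i.
Proof. unfold matvec. rewrite <- rsum_plus. apply rsum_ext; intros; ring. Qed.

Lemma matvec_scal c x i : matvec N V (fun j => c * x j) i = c * matvec N V x i.
Proof. unfold matvec. rewrite <- rsum_scal. apply rsum_ext; intros; ring. Qed.

Lemma matvec_opp x i : matvec N V (fun j => - x j) i = - matvec N V x i.
Proof. unfold matvec. rewrite <- rsum_opp. apply rsum_ext; intros; ring. Qed.

Lemma matvec_minus x y i : matvec N V (fun j => x j - y j) i = matvec N V x i - matvec N V y i.
Proof. unfold matvec. rewrite <- rsum_minus. apply rsum_ext; intros; ring. Qed.

Lemma matvec_rsum m c f i : matvec N V (fun j => rsum m (fun k => c k * f k j)) i = rsum m (fun k => c k * matvec N V (f k) i).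
Proof. unfold matvec. rewrite (rsum_ext N _ (fun j => rsum m (fun k => c k * (V i j * f k j)))).
  2:{ intros. rewrite <- rsum_scal. apply rsum_ext; intros; ring. }
  rewrite rsum_swap. apply rsum_ext; intros. rewrite rsum_scal. auto. Qed.

Lemma matvec_sym x y : symmetric N V -> dot N x (matvec N V y) = dot N (matvec N V x) y.
Proof. intros Hs. unfold dot, matvec.
  rewrite (rsum_ext N (fun i => x i * rsum N (fun j => V i j * y j)) (fun i => rsum N (fun j => x i * V i j * y j))).
  2:{ intros. rewrite <- rsum_scal. apply rsum_ext; intros; ring. }
  rewrite (rsum_ext N (fun i => rsum N (fun j => V i j * x j) * y i) (fun i => rsum N (fun j => V i j * x j * y i))).
  2:{ intros. rewrite Rmult_comm, <- rsum_scal. apply rsum_ext; intros; ring. }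
  rewrite rsum_swap. apply rsum_ext; intros. apply rsum_ext; intros. rewrite Hs by auto. ring. Qed.

Lemma pd_nonneg x : pos_def N V -> 0 <= dot N x (matvec N V x).
Proof. intros Hpd. destruct (Classical_Prop.classic (nonzero_vec N x)) as [H|H].
  - apply Rlt_le, Hpd, H.
  - unfold dot. rewrite rsum_zero; [lra|]. intros i Hi. destruct (Req_dec (x i) 0) as [E|E].
    + rewrite E; ring.
    + exfalso; apply H; exists i; auto. Qed.

Lemma pd_zero x : pos_def N V -> dot N x (matvec N V x) = 0 -> forall i, (i < N)%nat -> x i = 0.
Proof. intros Hpd H i Hi. destruct (Req_dec (x i) 0); auto. exfalso.
  assert (dot N x (matvec N V x) > 0) by (apply Hpd; exists i; auto). lra. Qed.

Definition spanf (f : nat -> vec) (m : nat) (x : vec) : Prop :=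
  exists c, forall i, (i < N)%nat -> x i = rsum m (fun k => c k * f k i).

Lemma spanf_ext f m x y : (forall i, (i < N)%nat -> x i = y i) -> spanf f m x -> spanf f m y.
Proof. intros H [c Hc]. exists c. intros. rewrite <- H by auto. auto. Qed.

Lemma spanf_zero f m : spanf f m (fun _ => 0).
Proof. exists (fun _ => 0). intros. symmetry; apply rsum_zero; intros; ring. Qed.

Lemma spanf_plus f m x y : spanf f m x -> spanf f m y -> spanf f m (fun i => x i + y i).
Proof. intros [c Hc] [d Hd]. exists (fun k => c k + d k). intros. rewrite Hc, Hd by auto. rewrite <- rsum_plus. apply rsum_ext; intros; ring. Qed.

Lemma spanf_scal f m a x : spanf f m x -> spanf f m (fun i => a * x i).
Proof. intros [c Hc]. exists (fun k => a * c k). intros. rewrite Hc by auto. rewrite <- rsum_scal. apply rsum_ext; intros; ring. Qed.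

Lemma spanf_minus f m x y : spanf f m x -> spanf f m y -> spanf f m (fun i => x i - y i).
Proof. intros Hx Hy. apply (spanf_ext f m (fun i => x i + (-1) * y i)). { intros; ring. }
  apply spanf_plus; auto. apply spanf_scal; auto. Qed.

Lemma spanf_mem f m k : (k < m)%nat -> spanf f m (f k).
Proof. intros Hk. exists (fun j => if Nat.eqb j k then 1 else 0). intros. rewrite rsum_delta; auto. Qed.

Lemma spanf_mono f m m' x : (m <= m')%nat -> spanf f m x -> spanf f m' x.
Proof. intros Hm [c Hc]. exists (fun k => if Nat.ltb k m then c k else 0). intros i Hi. rewrite Hc by auto.
  induction Hm.
  - apply rsum_ext. intros k Hk. apply Nat.ltb_lt in Hk. rewrite Hk. auto.
  - simpl. rewrite IHHm. assert (Nat.ltb m0 m = false) by (apply Nat.ltb_ge; lia). rewrite H. ring. Qed.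

Lemma spanf_comb f m n d g : (forall j, (j < n)%nat -> spanf f m (g j)) -> spanf f m (fun i => rsum n (fun j => d j * g j i)).
Proof. induction n; intros H; simpl.
  - apply spanf_zero.
  - apply spanf_plus. apply IHn; intros; apply H; lia. apply spanf_scal. apply H; lia. Qed.

Lemma orth_span f m z x : (forall k, (k < m)%nat -> dot N z (f k) = 0) -> spanf f m x -> dot N z x = 0.
Proof. intros H [c Hc]. rewrite dot_comm. rewrite (dot_ext x (fun i => rsum m (fun k => c k * f k i)) z z) by auto.
  rewrite dot_rsum_l. apply rsum_zero. intros. rewrite dot_comm, H by auto. ring. Qed.

Lemma proj_ex f m x : exists y, spanf f m y /\ forall k, (k < m)%nat -> dot N (fun i => x i - y i) (f k) = 0.
Proof. revert x. induction m; intros x.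
  - exists (fun _ => 0). split. apply spanf_zero. intros; lia.
  - destruct (IHm (f m)) as [y0 [Hy0 Ho0]].
    destruct (IHm x) as [y1 [Hy1 Ho1]].
    set (w := fun i => f m i - y0 i).
    set (r := fun i => x i - y1 i).
    destruct (Req_dec (dot N w w) 0) as [Hw|Hw].
    + exists y1. split. apply spanf_mono with m; auto.
      intros k Hk. destruct (Nat.eq_dec k m).
      * subst. assert (Hz := dot_zero w Hw).
        rewrite (dot_ext (fun i => x i - y1 i) (fun i => x i - y1 i) (f m) y0); [| auto | intros; unfold w in Hz; specialize (Hz i H); lra].
        apply (orth_span f m); auto.
      * apply Ho1; lia.
    + set (lam := dot N r w / dot N w w).
      exists (fun i => y1 i + lam * w i). split.
      * apply spanf_plus. apply spanf_mono with m; auto. apply spanf_scal. unfold w. apply spanf_minus.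
        apply spanf_mem; lia. apply spanf_mono with m; auto.
      * assert (Hwo : forall k, (k < m)%nat -> dot N w (f k) = 0) by (intros; apply Ho0; auto).
        assert (E : forall z, dot N (fun i => x i - (y1 i + lam * w i)) z = dot N r z - lam * dot N w z).
        { intros. rewrite <- dot_scal_l, <- dot_minus_l. apply dot_ext; auto. intros; unfold r; ring. }
        intros k Hk. rewrite E. destruct (Nat.eq_dec k m).
        -- subst. assert (HH : dot N r (f m) = dot N r w /\ dot N w (f m) = dot N w w).
           { assert (Hfm : forall z, dot N z (f m) = dot N z w + dot N z y0).
             { intros. rewrite (dot_comm z w), (dot_comm z y0), <- dot_plus_l, dot_comm. apply dot_ext; auto. intros; unfold w; ring. }
             rewrite !Hfm. rewrite (orth_span f m r y0), (orth_span f m w y0); auto. split; ring. }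
           destruct HH as [H1 H2]. rewrite H1, H2. unfold lam. field. auto.
        -- rewrite Ho1, Hwo by lia. ring. Qed.

End Vec.

Section Bound.
Variable N : nat.

Lemma dot_expand u w c : dot N (fun i => u i + c * w i) (fun i => u i + c * w i) = dot N u u + 2 * c * dot N u w + c * c * dot N w w.
Proof. unfold dot. rewrite <- !rsum_scal, <- !rsum_plus. apply rsum_ext; intros; ring. Qed.

Lemma span_bound f m : exists K, 0 <= K /\ forall x, spanf N f m x -> dot N x x <= K * rsum m (fun k => dot N x (f k) * dot N x (f k)).
Proof. induction m.
  - exists 0. split; [lra|]. intros x [c Hc]. simpl in Hc. rewrite (dot_ext N x (fun _ => 0) x (fun _ => 0)) by auto.
    unfold dot. rewrite rsum_zero; [simpl; lra|]. intros; ring.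
  - destruct IHm as [K [HK Hb]].
    destruct (proj_ex N f m (f m)) as [y0 [Hy0 Ho0]].
    set (w := fun i => f m i - y0 i).
    assert (Hpos : forall x, 0 <= rsum m (fun k => dot N x (f k) * dot N x (f k))) by (intros; apply rsum_nonneg; intros; apply sq_nn).
    destruct (Req_dec (dot N w w) 0) as [Hw|Hw].
    + exists K. split; auto. intros x [c Hc].
      assert (Hz := dot_zero N w Hw).
      assert (Hx : spanf N f m x).
      { apply (spanf_ext N f m (fun i => rsum m (fun k => c k * f k i) + c m * y0 i)).
        - intros i Hi. rewrite Hc by auto. simpl. specialize (Hz i Hi). unfold w in Hz. replace (f m i) with (y0 i) by lra. ring.
        - apply spanf_plus. exists c; auto. apply spanf_scal; auto. }
      specialize (Hb x Hx). simpl. pose proof (sq_nn (dot N x (f m))). nra.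
    + assert (HW : 0 < dot N w w) by (pose proof (dot_nonneg N w); lra).
      destruct Hy0 as [d Hd].
      set (D := rsum m (fun k => d k * d k)).
      assert (HD : 0 <= D) by (apply rsum_nonneg; intros; apply sq_nn).
      exists (K + (2 + 2 * D) / dot N w w). split.
      { apply Rplus_le_le_0_compat; auto. apply Rle_mult_inv_pos; lra. }
      intros x [c Hc].
      set (u := fun i => x i - c m * w i).
      assert (Hu : spanf N f m u).
      { apply (spanf_ext N f m (fun i => rsum m (fun k => c k * f k i) + c m * y0 i)).
        - intros i Hi. unfold u, w. rewrite Hc by auto. simpl. ring.
        - apply spanf_plus. exists c; auto. apply spanf_scal. exists d; auto. }
      assert (Hwo : forall k, (k < m)%nat -> dot N w (f k) = 0) by (intros; apply Ho0; auto).
      assert (Huw : dot N u w = 0) by (rewrite dot_comm; apply (orth_span N f m); auto).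
      assert (Huf : forall k, (k < m)%nat -> dot N u (f k) = dot N x (f k)).
      { intros k Hk. unfold u. rewrite (dot_ext N _ (fun i => x i + (- c m) * w i) (f k) (f k)) by (intros; try ring; auto).
        rewrite dot_plus_l, dot_scal_l, Hwo by auto. ring. }
      assert (Hxx : dot N x x = dot N u u + c m * c m * dot N w w).
      { rewrite (dot_ext N x (fun i => u i + c m * w i) x (fun i => u i + c m * w i)) by (intros; unfold u; ring).
        rewrite dot_expand, Huw. ring. }
      assert (Hxw : dot N x w = c m * dot N w w).
      { rewrite (dot_ext N x (fun i => u i + c m * w i) w w) by (intros; unfold u; ring; auto).
        rewrite dot_plus_l, dot_scal_l, Huw. ring. }
      assert (Hxw2 : dot N x w = dot N x (f m) - rsum m (fun k => d k * dot N x (f k))).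
      { unfold w. rewrite dot_comm, dot_minus_l. rewrite (dot_comm N (f m)). f_equal.
        rewrite (dot_ext N y0 (fun i => rsum m (fun k => d k * f k i)) x x) by auto.
        rewrite dot_rsum_l. apply rsum_ext; intros. rewrite dot_comm; auto. }
      set (a := dot N x (f m)). set (S := rsum m (fun k => dot N x (f k) * dot N x (f k))).
      assert (HCS : rsum m (fun k => d k * dot N x (f k)) * rsum m (fun k => d k * dot N x (f k)) <= D * S).
      { apply rsum_CS. }
      assert (HuS : dot N u u <= K * S).
      { unfold S. rewrite <- (rsum_ext m (fun k => dot N u (f k) * dot N u (f k))). apply Hb; auto.
        intros. rewrite Huf; auto. }
      assert (HS : 0 <= S) by apply Hpos.
      set (T := rsum m (fun k => d k * dot N x (f k))) in *.
      assert (Hc2 : c m * c m * dot N w w * dot N w w <= 2 * a * a + 2 * D * S).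
      { assert (c m * dot N w w = a - T) by (rewrite <- Hxw; rewrite Hxw2; auto).
        replace (c m * c m * dot N w w * dot N w w) with ((a - T) * (a - T)) by (rewrite <- H; ring).
        pose proof (sq_nn (a + T)). nra. }
      assert (Hc3 : c m * c m * dot N w w <= (2 * a * a + 2 * D * S) / dot N w w).
      { apply Rmult_le_reg_r with (dot N w w); auto. replace ((2 * a * a + 2 * D * S) / dot N w w * dot N w w) with (2 * a * a + 2 * D * S) by (field; apply Rgt_not_eq; lra). lra. }
      simpl. fold S. fold a. rewrite Hxx.
      assert ((2 * a * a + 2 * D * S) / dot N w w <= (2 + 2 * D) / dot N w w * (S + a * a)).
      { unfold Rdiv. assert (0 < / dot N w w) by (apply Rinv_0_lt_compat; lra).
        pose proof (sq_nn a). assert (0 <= / dot N w w * (2 * S + 2 * D * (a * a))).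
        { apply Rmult_le_pos; [lra|]. assert (0 <= D * (a * a)) by (apply Rmult_le_pos; lra). lra. }
        assert ((2 + 2 * D) * / dot N w w * (S + a * a) - (2 * a * a + 2 * D * S) * / dot N w w = / dot N w w * (2 * S + 2 * D * (a * a))) by ring.
        lra. }
      pose proof (sq_nn a). assert (0 <= (2 + 2 * D) / dot N w w) by (apply Rle_mult_inv_pos; lra).
      nra. Qed.

Lemma rsum_const1 n : rsum n (fun _ => 1) = INR n.
Proof. induction n; simpl; auto. rewrite IHn. destruct n; simpl; lra. Qed.

Lemma bessel (u : nat -> vec) n x :
  (forall j l, (j < n)%nat -> (l < n)%nat -> j <> l -> dot N (u j) (u l) = 0) ->
  (forall j, (j < n)%nat -> 0 < dot N (u j) (u j)) ->
  rsum n (fun j => dot N x (u j) * dot N x (u j) / dot N (u j) (u j)) <= dot N x x.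
Proof. intros Ho Hp.
  set (a := fun j => dot N x (u j) / dot N (u j) (u j)).
  assert (forall n', (n' <= n)%nat -> dot N (fun i => x i - rsum n' (fun j => a j * u j i)) (fun i => x i - rsum n' (fun j => a j * u j i))
     = dot N x x - rsum n' (fun j => dot N x (u j) * dot N x (u j) / dot N (u j) (u j))).
  { induction n'; intros Hn.
    - simpl. rewrite Rminus_0_r. apply dot_ext; intros; ring.
    - set (r := fun i => x i - rsum n' (fun j => a j * u j i)).
      simpl. rewrite (dot_ext N _ (fun i => r i + (- a n') * u n' i) _ (fun i => r i + (- a n') * u n' i)) by (intros; unfold r; ring).
      rewrite dot_expand. unfold r at 1 2. rewrite IHn' by lia.
      assert (dot N r (u n') = dot N x (u n')).
      { unfold r. rewrite dot_minus_l. rewrite dot_rsum_l. rewrite rsum_zero. ring. intros. rewrite Ho by lia. ring. }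
      rewrite H. unfold a. field. apply Rgt_not_eq. apply Hp. lia. }
  pose proof (H n (le_n n)). pose proof (dot_nonneg N (fun i => x i - rsum n (fun j => a j * u j i))). lra.
Qed.

Definition unitv (i : nat) : vec := fun k => if Nat.eqb k i then 1 else 0.

Lemma dot_unitv i y : (i < N)%nat -> dot N (unitv i) y = y i.
Proof. intros. unfold dot, unitv. apply rsum_delta; auto. Qed.

Lemma orth_dim (u : nat -> vec) :
  (forall j l, (j < S N)%nat -> (l < S N)%nat -> j <> l -> dot N (u j) (u l) = 0) ->
  (forall j, (j < S N)%nat -> 0 < dot N (u j) (u j)) -> False.
Proof. intros Ho Hp.
  assert (H1 : rsum N (fun i => rsum (S N) (fun j => dot N (unitv i) (u j) * dot N (unitv i) (u j) / dot N (u j) (u j))) <= rsum N (fun _ => 1)).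
  { apply rsum_le. intros i Hi.
    assert (Hone: dot N (unitv i) (unitv i) = 1) by (rewrite dot_unitv by auto; unfold unitv; rewrite Nat.eqb_refl; auto).
    rewrite <- Hone. apply bessel; auto. }
  rewrite rsum_swap in H1. rewrite rsum_const1 in H1.
  rewrite (rsum_ext (S N) _ (fun _ => 1)) in H1.
  - rewrite rsum_const1 in H1. rewrite S_INR in H1. lra.
  - intros j Hj. rewrite (rsum_ext N _ (fun i => / dot N (u j) (u j) * (u j i * u j i))).
    + rewrite rsum_scal. fold (dot N (u j) (u j)). field. apply Rgt_not_eq, Hp; auto.
    + intros i Hi. rewrite dot_unitv by auto. field. apply Rgt_not_eq, Hp; auto.
Qed.

Lemma dim_ex f : exists m, (m <= N)%nat /\ spanf N f m (f m).
Proof. apply Classical_Prop.NNPP. intros Hn.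
  set (pr := fun m x => proj1_sig (constructive_indefinite_description _ (proj_ex N f m x))).
  assert (Hpr : forall m x, spanf N f m (pr m x) /\ forall k, (k < m)%nat -> dot N (fun i => x i - pr m x i) (f k) = 0).
  { intros. unfold pr. destruct (constructive_indefinite_description _ _). simpl. auto. }
  set (res := fun m => fun i => f m i - pr m (f m) i).
  assert (Hres_span : forall j, spanf N f (S j) (res j)).
  { intros. apply spanf_minus. apply spanf_mem; lia. apply spanf_mono with j; auto. apply Hpr. }
  assert (Horth : forall j l, (j < l)%nat -> dot N (res l) (res j) = 0).
  { intros. apply (orth_span N f l). intros; apply Hpr; auto. apply spanf_mono with (S j); auto. }
  apply (orth_dim res).
  - intros j l Hj Hl Hjl. destruct (Nat.lt_ge_cases j l).
    + rewrite dot_comm; apply Horth; auto.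
    + apply Horth; lia.
  - intros j Hj. destruct (Rle_lt_or_eq_dec 0 _ (dot_nonneg N (res j))); auto. exfalso.
    apply Hn. exists j. split; [lia|]. apply (spanf_ext N f j (pr j (f j))). 2: apply Hpr.
    intros i Hi. assert (Hz := dot_zero N (res j) (eq_sym e) i Hi). unfold res in Hz. lra.
Qed.

End Bound.

Section LV.
Variable N : nat.
Variable V : nat -> nat -> R.
Hypothesis HN : (1 <= N)%nat.
Hypothesis Hsym : symmetric N V.
Hypothesis Hpd : pos_def N V.

Notation VE := (Vke1 N V).

Lemma lV_span x : in_lV N V x <-> exists m, spanf N VE m x.
Proof. unfold in_lV, spanf. tauto. Qed.

Lemma lV_ext x y : (forall i, (i < N)%nat -> x i = y i) -> in_lV N V x -> in_lV N V y.
Proof. intros H Hx. apply lV_span in Hx as [m Hm]. apply lV_span. exists m. apply (spanf_ext N _ _ x); auto. Qed.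

Lemma lV_zero : in_lV N V (fun _ => 0).
Proof. apply lV_span. exists 0%nat. apply spanf_zero. Qed.

Lemma lV_plus x y : in_lV N V x -> in_lV N V y -> in_lV N V (fun i => x i + y i).
Proof. intros Hx Hy. apply lV_span in Hx as [m1 H1]. apply lV_span in Hy as [m2 H2]. apply lV_span.
  exists (max m1 m2). apply spanf_plus; [apply (spanf_mono N _ m1); [apply Nat.le_max_l | exact H1] | apply (spanf_mono N _ m2); [apply Nat.le_max_r | exact H2]]. Qed.

Lemma lV_scal a x : in_lV N V x -> in_lV N V (fun i => a * x i).
Proof. intros Hx. apply lV_span in Hx as [m H]. apply lV_span. exists m. apply spanf_scal; auto. Qed.

Lemma lV_minus x y : in_lV N V x -> in_lV N V y -> in_lV N V (fun i => x i - y i).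
Proof. intros. apply (lV_ext (fun i => x i + (-1) * y i)). intros; ring. apply lV_plus; auto. apply lV_scal; auto. Qed.

Lemma lV_opp x : in_lV N V x -> in_lV N V (fun i => - x i).
Proof. intros. apply (lV_ext (fun i => (-1) * x i)). intros; ring. apply lV_scal; auto. Qed.

Lemma lV_VE k : in_lV N V (VE k).
Proof. apply lV_span. exists (S k). apply spanf_mem; lia. Qed.

Lemma lV_e1 : in_lV N V e1.
Proof. apply (lV_VE 0). Qed.

Lemma lV_spanf f m x : (forall k, (k < m)%nat -> in_lV N V (f k)) -> spanf N f m x -> in_lV N V x.
Proof. intros Hf [c Hc]. apply (lV_ext (fun i => rsum m (fun k => c k * f k i))). intros; rewrite Hc; auto.
  clear Hc. induction m; simpl. apply lV_zero. apply lV_plus. apply IHm; intros; apply Hf; lia. apply lV_scal; apply Hf; lia. Qed.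

Lemma lV_V x : in_lV N V x -> in_lV N V (matvec N V x).
Proof. intros Hx. apply lV_span in Hx as [m [c Hc]].
  apply (lV_ext (fun i => rsum m (fun k => c k * VE (S k) i))).
  - intros i Hi. rewrite (matvec_ext N V x (fun j => rsum m (fun k => c k * VE k j))) by auto.
    rewrite matvec_rsum. auto.
  - apply lV_spanf with (f := fun k => VE (S k)) (m := m). intros; apply lV_VE. exists c; auto. Qed.

Lemma lV_stab : exists m, forall x, in_lV N V x -> spanf N VE m x.
Proof. destruct (dim_ex N VE) as [m [_ Hm]]. exists m.
  assert (Hle : forall j, (j <= m)%nat -> spanf N VE m (VE j)).
  { intros j Hj. destruct (Nat.eq_dec j m). subst; auto. apply spanf_mem; lia. }
  assert (Hall : forall k, spanf N VE m (VE k)).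
  { induction k.
    - apply Hle; lia.
    - destruct IHk as [c Hc]. simpl.
      apply (spanf_ext N VE m (fun i => rsum m (fun j => c j * VE (S j) i))).
      + intros i Hi. rewrite (matvec_ext N V (VE k) (fun j => rsum m (fun l => c l * VE l j))) by auto.
        rewrite matvec_rsum. auto.
      + apply spanf_comb. intros; apply Hle; lia. }
  intros x Hx. apply lV_span in Hx as [m' [c Hc]].
  apply (spanf_ext N VE m (fun i => rsum m' (fun k => c k * VE k i))). intros; rewrite Hc; auto.
  apply spanf_comb. intros; apply Hall. Qed.

Lemma lV_orth_zero z : in_lV N V z -> (forall k, dot N z (VE k) = 0) -> forall i, (i < N)%nat -> z i = 0.
Proof. intros Hz Ho. destruct lV_stab as [m Hm]. apply dot_zero. apply (orth_span N VE m); auto. Qed.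

Lemma lV_orth_zero' z : in_lV N V z -> (forall k, dot N z (VE (S k)) = 0) -> forall i, (i < N)%nat -> z i = 0.
Proof. intros Hz Ho.
  assert (Hv : forall i, (i < N)%nat -> matvec N V z i = 0).
  { apply lV_orth_zero. apply lV_V; auto. intros k. rewrite <- matvec_sym by auto. apply Ho. }
  apply (pd_zero N V z Hpd). unfold dot. apply rsum_zero. intros i Hi. rewrite Hv by auto. ring. Qed.

Lemma lV_shift : exists m, forall x, in_lV N V x -> spanf N (fun k => VE (S k)) m x.
Proof. destruct lV_stab as [m Hm]. exists m. intros x Hx.
  destruct (proj_ex N (fun k => VE (S k)) m x) as [y [Hy Ho]].
  assert (Hyl : in_lV N V y) by (apply (lV_spanf (fun k => VE (S k)) m); auto; intros; apply lV_VE).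
  set (z := fun i => x i - y i).
  assert (Hzl : in_lV N V z) by (apply lV_minus; auto).
  assert (Hvo : forall k, (k < m)%nat -> dot N (matvec N V z) (VE k) = 0).
  { intros k Hk. rewrite <- matvec_sym by auto. apply (Ho k Hk). }
  assert (Hvv : dot N (matvec N V z) (matvec N V z) = 0).
  { apply (orth_span N VE m); auto. apply Hm. apply lV_V; auto. }
  assert (Hv := dot_zero N _ Hvv).
  assert (Hz0 : forall i, (i < N)%nat -> z i = 0).
  { apply (pd_zero N V z Hpd). unfold dot. apply rsum_zero. intros i Hi. rewrite Hv by auto. ring. }
  apply (spanf_ext N _ m y); auto. intros i Hi. specialize (Hz0 i Hi). unfold z in Hz0. lra.
Qed.

Lemma lV_decomp (x : vec) : exists y z : vec, in_lV N V y /\ (forall w : vec, in_lV N V w -> dot N z w = 0) /\ (forall i, (i < N)%nat -> x i = y i + z i).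
Proof. destruct lV_stab as [m Hm]. destruct (proj_ex N VE m x) as [y [Hy Ho]].
  exists y, (fun i => x i - y i). split; [|split].
  - apply (lV_spanf VE m); auto; intros; apply lV_VE.
  - intros w Hw. apply (orth_span N VE m); auto.
  - intros; ring. Qed.

Lemma lV_bound : exists m K, 0 <= K /\ forall x, in_lV N V x ->
  dot N x x <= K * rsum m (fun k => dot N x (VE (S k)) * dot N x (VE (S k))).
Proof. destruct lV_shift as [m Hm]. destruct (span_bound N (fun k => VE (S k)) m) as [K [HK Hb]].
  exists m, K. split; auto. Qed.

End LV.

Definition Bf (N : nat) (V : nat -> nat -> R) (x y : state) : R :=
  dot N (snd x) (snd y) + dot N (fst x) (matvec N V (fst y)).

Definition yv N V alpha (j : nat) (x : state) : R := snd (Apow N V alpha j x) 0%nat.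

Section Alg.
Variable N : nat.
Variable V : nat -> nat -> R.
Variable alpha : R.
Hypothesis HN : (1 <= N)%nat.
Hypothesis Hsym : symmetric N V.
Hypothesis Hpd : pos_def N V.
Hypothesis Halpha : alpha > 0.

Notation VE := (Vke1 N V).
Notation A := (Aop N V alpha).

Lemma Ham_B x : Ham N V x = / 2 * Bf N V x x.
Proof. unfold Ham, Bf. ring. Qed.

Lemma B_sym x y : Bf N V x y = Bf N V y x.
Proof. unfold Bf. rewrite (dot_comm N (snd x)). rewrite matvec_sym by auto. rewrite (dot_comm N (fst y)). auto. Qed.

Lemma B_ext x x' y y' : st_eq N x x' -> st_eq N y y' -> Bf N V x y = Bf N V x' y'.
Proof. intros H1 H2. unfold Bf. f_equal.
  - apply dot_ext; intros; [apply H1|apply H2]; auto.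
  - apply dot_ext; intros; [apply H1; auto|]. apply matvec_ext. intros; apply H2; auto. Qed.

Lemma Aop_ext x y : st_eq N x y -> st_eq N (A x) (A y).
Proof. intros H i Hi. simpl. split. apply H; auto.
  rewrite (matvec_ext N V (fst x) (fst y)) by (intros; apply H; auto).
  destruct (H 0%nat) as [_ H0]; [lia|]. rewrite H0. auto. Qed.

Lemma Apow_S k x : Apow N V alpha (S k) x = A (Apow N V alpha k x).
Proof. reflexivity. Qed.

Lemma Apow_add j k x : Apow N V alpha j (Apow N V alpha k x) = Apow N V alpha (j + k) x.
Proof. induction j; simpl; auto. unfold Apow in *. simpl. rewrite IHj. auto. Qed.

Lemma Apow_ext j x y : st_eq N x y -> st_eq N (Apow N V alpha j x) (Apow N V alpha j y).
Proof. induction j; intros H. exact H. rewrite !Apow_S. apply Aop_ext; auto. Qed.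

Lemma st_eq_refl x : st_eq N x x.
Proof. intros i Hi; auto. Qed.

Lemma dot_delta c z : dot N (fun i => if Nat.eqb i 0 then c else 0) z = c * z 0%nat.
Proof. rewrite (dot_ext N _ (fun i => c * e1 i) z z). rewrite dot_scal_l, dot_comm, dot_e1; auto.
  intros i _. unfold e1. destruct (Nat.eqb i 0); ring. auto. Qed.

Lemma dot_sndA x z : dot N (snd (A x)) z = - dot N (matvec N V (fst x)) z - alpha * snd x 0%nat * z 0%nat.
Proof. simpl. rewrite dot_minus_l, dot_opp_l, dot_delta. auto. Qed.

Lemma B_A x y : Bf N V (A x) y + Bf N V x (A y) = -2 * alpha * snd x 0%nat * snd y 0%nat.
Proof. unfold Bf. rewrite dot_sndA. rewrite (dot_comm N (snd x) (snd (A y))), dot_sndA.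
  simpl fst. rewrite (matvec_sym N V (fst x) (snd y)) by auto.
  rewrite (dot_comm N (matvec N V (fst y)) (snd x)). ring. Qed.

Lemma B_xAx x : Bf N V x (A x) = - alpha * snd x 0%nat * snd x 0%nat.
Proof. pose proof (B_A x x). rewrite B_sym in H. lra. Qed.

Lemma B_nonneg x : 0 <= Bf N V x x.
Proof. unfold Bf. pose proof (dot_nonneg N (snd x)). pose proof (pd_nonneg N V (fst x) Hpd). lra. Qed.

Lemma B_pos x : st_nonzero N x -> 0 < Bf N V x x.
Proof. intros [H|H]; unfold Bf; pose proof (dot_nonneg N (snd x)); pose proof (pd_nonneg N V (fst x) Hpd).
  - specialize (Hpd _ H). lra.
  - pose proof (dot_pos N _ H). lra. Qed.

Lemma B_lin2 x a y b z : Bf N V x (st_lin a y b z) = a * Bf N V x y + b * Bf N V x z.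
Proof. unfold Bf, st_lin. simpl.
  rewrite (dot_comm N (snd x)), dot_plus_l, !dot_scal_l, !(dot_comm N _ (snd x)).
  rewrite (dot_ext N (fst x) (fst x) _ (fun i => a * matvec N V (fst y) i + b * matvec N V (fst z) i)).
  2: auto. 2:{ intros. rewrite matvec_plus, !matvec_scal. auto. }
  rewrite (dot_comm N (fst x)), dot_plus_l, !dot_scal_l, !(dot_comm N _ (fst x)). ring. Qed.

Lemma B_CS x y : Bf N V x y * Bf N V x y <= Bf N V x x * Bf N V y y.
Proof. apply CS_abs. apply B_nonneg. intros l.
  pose proof (B_nonneg (st_lin 1 x (-l) y)).
  rewrite B_lin2 in H. rewrite !(B_sym (st_lin 1 x (- l) y)) in H. rewrite !B_lin2 in H.
  rewrite (B_sym y x) in H. lra. Qed.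

Lemma Lminus_A psi : in_Lminus N V psi -> in_Lminus N V (A psi).
Proof. intros [Hq Hp]. split; simpl; auto.
  apply (lV_ext N V (fun i => - matvec N V (fst psi) i - (alpha * snd psi 0%nat) * e1 i)).
  - intros i _. unfold e1. destruct (Nat.eqb i 0); ring.
  - apply lV_minus. apply lV_opp, lV_V; auto. apply lV_scal, lV_e1; auto. Qed.

Lemma L0_A psi : in_L0 N V psi -> in_L0 N V (A psi).
Proof. intros H phi [Hq Hp]. unfold dot2.
  assert (H1 : dot2 N psi (fun i => - matvec N V (snd phi) i, fst phi) = 0).
  { apply H. split; simpl; auto. apply lV_opp, lV_V; auto. }
  assert (H2 : dot2 N psi (fun _ => 0, e1) = 0).
  { apply H. split; simpl. apply lV_zero. apply lV_e1; auto. }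
  unfold dot2 in H1, H2. simpl in H1, H2.
  rewrite dot_e1 in H2 by auto. replace (dot N (fst psi) (fun _ => 0)) with 0 in H2 by (unfold dot; rewrite rsum_zero; auto; intros; ring).
  rewrite dot_sndA. simpl fst.
  rewrite (dot_comm N (fst psi)) in H1. rewrite dot_opp_l in H1. rewrite <- matvec_sym in H1 by auto.
  rewrite (dot_comm N (snd phi)) in H1. assert (Hp0 : snd psi 0%nat = 0) by lra. rewrite Hp0. lra. Qed.

Lemma eig_neg a b : eigenvalue_Aminus N V alpha a b -> a < 0.
Proof. intros [u [v [[Huq Hup] [[Hvq Hvp] [Hnz [Hu Hv]]]]]].
  assert (E1 : Bf N V u (A u) = a * Bf N V u u + (- b) * Bf N V u v).
  { rewrite (B_ext u u (A u) (st_lin a u (- b) v)) by (auto using st_eq_refl). apply B_lin2. }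
  assert (E2 : Bf N V v (A v) = b * Bf N V v u + a * Bf N V v v).
  { rewrite (B_ext v v (A v) (st_lin b u a v)) by (auto using st_eq_refl). apply B_lin2. }
  rewrite B_xAx in E1, E2. rewrite (B_sym v u) in E2.
  assert (Hs : 0 < Bf N V u u + Bf N V v v).
  { pose proof (B_nonneg u). pose proof (B_nonneg v). destruct Hnz as [Hn|Hn]; pose proof (B_pos _ Hn); lra. }
  assert (Hsum : a * (Bf N V u u + Bf N V v v) = - alpha * (snd u 0%nat * snd u 0%nat + snd v 0%nat * snd v 0%nat)) by lra.
  destruct (Rlt_or_le a 0) as [Ha|Ha]; auto. exfalso.
  pose proof (sq_nn (snd u 0%nat)). pose proof (sq_nn (snd v 0%nat)).
  assert (0 <= a * (Bf N V u u + Bf N V v v)) by (apply Rmult_le_pos; lra).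
  assert (Hp0 : snd u 0%nat * snd u 0%nat + snd v 0%nat * snd v 0%nat = 0).
  { assert (alpha * (snd u 0%nat * snd u 0%nat + snd v 0%nat * snd v 0%nat) <= 0) by lra.
    assert (0 <= alpha * (snd u 0%nat * snd u 0%nat + snd v 0%nat * snd v 0%nat)) by (apply Rmult_le_pos; lra).
    assert (alpha * (snd u 0%nat * snd u 0%nat + snd v 0%nat * snd v 0%nat) = 0) by lra.
    apply Rmult_integral in H4. destruct H4; [lra|auto]. }
  assert (Hu0 : snd u 0%nat = 0) by (assert (snd u 0%nat * snd u 0%nat = 0) by lra; apply Rmult_integral in H2; tauto).
  assert (Hv0 : snd v 0%nat = 0) by (assert (snd v 0%nat * snd v 0%nat = 0) by lra; apply Rmult_integral in H2; tauto).
  assert (Ha0 : a = 0).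
  { assert (a * (Bf N V u u + Bf N V v v) = 0) by (rewrite Hsum, Hu0, Hv0; ring).
    apply Rmult_integral in H2. destruct H2; auto. lra. }
  subst a.
  assert (Eup : forall i, (i < N)%nat -> snd u i = - b * fst v i).
  { intros i Hi. destruct (Hu i Hi) as [E _]. simpl in E. rewrite E. ring. }
  assert (Evp : forall i, (i < N)%nat -> snd v i = b * fst u i).
  { intros i Hi. destruct (Hv i Hi) as [E _]. simpl in E. rewrite E. ring. }
  assert (EVu : forall i, (i < N)%nat -> matvec N V (fst u) i = b * b * fst u i).
  { intros i Hi. destruct (Hu i Hi) as [_ E]. simpl in E. rewrite Hu0 in E. rewrite Evp in E by auto.
    destruct (Nat.eqb i 0); lra. }
  assert (EVv : forall i, (i < N)%nat -> matvec N V (fst v) i = b * b * fst v i).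
  { intros i Hi. destruct (Hv i Hi) as [_ E]. simpl in E. rewrite Hv0 in E. rewrite Eup in E by auto.
    destruct (Nat.eqb i 0); lra. }
  assert (Hgen : forall w, (forall i, (i < N)%nat -> matvec N V w i = b * b * w i) -> b * w 0%nat = 0 ->
            forall k, dot N w (VE (S k)) = 0).
  { intros w Hw Hw0. assert (forall k, dot N w (VE (S k)) = b * b * dot N w (VE k)).
    { intros k. simpl. rewrite matvec_sym by auto. rewrite (dot_ext N _ (fun i => b * b * w i) (VE k) (VE k)) by auto.
      rewrite dot_scal_l. auto. }
    induction k. rewrite H2. simpl VE. rewrite dot_e1 by auto. replace (b * b * w 0%nat) with (b * (b * w 0%nat)) by ring. rewrite Hw0. ring.
    rewrite H2, IHk. ring. }
  assert (Zu : forall i, (i < N)%nat -> fst u i = 0).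
  { apply (lV_orth_zero' N V HN Hsym Hpd); auto. apply Hgen; auto. rewrite <- Evp by auto. auto. }
  assert (Zv : forall i, (i < N)%nat -> fst v i = 0).
  { apply (lV_orth_zero' N V HN Hsym Hpd); auto. apply Hgen; auto. assert (snd u 0%nat = - b * fst v 0%nat) by (apply Eup; lia). lra. }
  destruct Hnz as [[[i [Hi Hn]]|[i [Hi Hn]]]|[[i [Hi Hn]]|[i [Hi Hn]]]]; apply Hn.
  - auto.
  - rewrite Eup, Zv by auto. ring.
  - auto.
  - rewrite Evp, Zu by auto. ring.
Qed.

End Alg.

Section Obs.
Variable N : nat.
Variable V : nat -> nat -> R.
Variable alpha : R.
Hypothesis HN : (1 <= N)%nat.
Hypothesis Hsym : symmetric N V.
Hypothesis Hpd : pos_def N V.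
Hypothesis Halpha : alpha > 0.

Notation VE := (Vke1 N V).
Notation A := (Aop N V alpha).
Notation y := (yv N V alpha).

Lemma sq_sum2 a b : (a + b) * (a + b) <= 2 * (a * a) + 2 * (b * b).
Proof. pose proof (sq_nn (a - b)). lra. Qed.

Lemma yv_shift j k z : y j (Apow N V alpha k z) = y (j + k) z.
Proof. unfold yv. rewrite Apow_add. auto. Qed.

Lemma idp z k : dot N (snd z) (VE (S k)) = - dot N (snd (Apow N V alpha 2 z)) (VE k) - alpha * y 1 z * VE k 0%nat.
Proof. change (VE (S k)) with (matvec N V (VE k)). rewrite matvec_sym by auto.
  change (Apow N V alpha 2 z) with (A (A z)). rewrite dot_sndA by auto. simpl fst. unfold yv. simpl. ring. Qed.

Lemma idq z k : dot N (fst z) (VE (S k)) = - dot N (snd (A z)) (VE k) - alpha * y 0 z * VE k 0%nat.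
Proof. change (VE (S k)) with (matvec N V (VE k)). rewrite matvec_sym by auto.
  rewrite dot_sndA by auto. unfold yv. simpl. ring. Qed.

Lemma rsum_S n f : rsum (S n) f = rsum n f + f n.
Proof. reflexivity. Qed.

Definition ysq z := fun j => y j z * y j z.

Lemma ysq_nn z j : 0 <= ysq z j.
Proof. apply sq_nn. Qed.

Lemma Lp k : exists G, 0 <= G /\ forall z, dot N (snd z) (VE k) * dot N (snd z) (VE k) <= G * rsum (2 * k + 1) (ysq z).
Proof. induction k.
  - exists 1. split; [lra|]. intros z. simpl. rewrite dot_e1 by auto. unfold ysq, yv. simpl. lra.
  - destruct IHk as [G [HG Hb]]. set (c := VE k 0%nat).
    exists (2 * G + 2 * (alpha * c) * (alpha * c)). split. { pose proof (sq_nn (alpha * c)). lra. }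
    intros z. rewrite idp. fold c.
    set (X := dot N (snd (Apow N V alpha 2 z)) (VE k)).
    assert (H1 : (- X - alpha * y 1 z * c) * (- X - alpha * y 1 z * c) <= 2 * (X * X) + 2 * (alpha * c) * (alpha * c) * ysq z 1%nat).
    { pose proof (sq_sum2 (- X) (- (alpha * y 1 z * c))). unfold ysq. replace (- X - alpha * y 1 z * c) with (- X + - (alpha * y 1 z * c)) by ring. nra. }
    assert (H2 : X * X <= G * rsum (2 * k + 1 + 2) (ysq z)).
    { unfold X. eapply Rle_trans. apply Hb. apply Rmult_le_compat_l; auto.
      rewrite (rsum_ext _ _ (fun j => ysq z (j + 2)%nat)). apply rsum_shift_le. intros; apply ysq_nn.
      intros j _. unfold ysq. rewrite yv_shift. auto. }
    assert (H3 : ysq z 1%nat <= rsum (2 * k + 1 + 2) (ysq z)) by (apply rsum_term_le; [intros; apply ysq_nn| lia]).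
    replace (2 * S k + 1)%nat with (2 * k + 1 + 2)%nat by lia.
    pose proof (sq_nn (alpha * c)). nra. Qed.

Lemma Lq k : exists G, 0 <= G /\ forall z, dot N (fst z) (VE (S k)) * dot N (fst z) (VE (S k)) <= G * rsum (2 * k + 2) (ysq z).
Proof. destruct (Lp k) as [G [HG Hb]]. set (c := VE k 0%nat).
  exists (2 * G + 2 * (alpha * c) * (alpha * c)). split. { pose proof (sq_nn (alpha * c)). lra. }
  intros z. rewrite idq. fold c.
  set (X := dot N (snd (A z)) (VE k)).
  assert (H1 : (- X - alpha * y 0 z * c) * (- X - alpha * y 0 z * c) <= 2 * (X * X) + 2 * (alpha * c) * (alpha * c) * ysq z 0%nat).
  { pose proof (sq_sum2 (- X) (- (alpha * y 0 z * c))). unfold ysq. replace (- X - alpha * y 0 z * c) with (- X + - (alpha * y 0 z * c)) by ring. nra. }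
  assert (H2 : X * X <= G * rsum (2 * k + 1 + 1) (ysq z)).
  { unfold X. eapply Rle_trans. apply (Hb (A z)). apply Rmult_le_compat_l; auto.
    rewrite (rsum_ext _ _ (fun j => ysq z (j + 1)%nat)). apply rsum_shift_le. intros; apply ysq_nn.
    intros j _. unfold ysq. rewrite <- yv_shift. auto. }
  assert (H3 : ysq z 0%nat <= rsum (2 * k + 1 + 1) (ysq z)) by (apply rsum_term_le; [intros; apply ysq_nn| lia]).
  replace (2 * k + 2)%nat with (2 * k + 1 + 1)%nat by lia.
  pose proof (sq_nn (alpha * c)).
  assert (2 * (alpha * c) * (alpha * c) * ysq z 0%nat <= 2 * (alpha * c) * (alpha * c) * rsum (2 * k + 1 + 1) (ysq z)).
  { rewrite !(Rmult_assoc 2). apply Rmult_le_compat_l; [lra|]. apply Rmult_le_compat_l; auto. }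
  lra. Qed.

Lemma Lpq m : exists G, 0 <= G /\ forall z, rsum m (fun k => dot N (fst z) (VE (S k)) * dot N (fst z) (VE (S k)) + dot N (snd z) (VE (S k)) * dot N (snd z) (VE (S k))) <= G * rsum (2 * m + 1) (ysq z).
Proof. induction m.
  - exists 0. split; [lra|]. intros; simpl. lra.
  - destruct IHm as [G [HG Hb]]. destruct (Lq m) as [Gq [HGq Hq]]. destruct (Lp (S m)) as [Gp [HGp Hp]].
    exists (G + Gq + Gp). split; [lra|]. intros z. rewrite (rsum_S m).
    specialize (Hb z). specialize (Hq z). specialize (Hp z).
    assert (rsum (2 * m + 1) (ysq z) <= rsum (2 * S m + 1) (ysq z)) by (apply rsum_mono_n; [intros; apply ysq_nn|lia]).
    assert (rsum (2 * m + 2) (ysq z) <= rsum (2 * S m + 1) (ysq z)) by (apply rsum_mono_n; [intros; apply ysq_nn|lia]).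
    assert (0 <= rsum (2 * m + 1) (ysq z)) by (apply rsum_nonneg; intros; apply ysq_nn).
    assert (0 <= rsum (2 * m + 2) (ysq z)) by (apply rsum_nonneg; intros; apply ysq_nn).
    nra. Qed.

Lemma obs_bound : exists J K, 0 <= K /\ forall x, in_Lminus N V x -> dot2 N x x <= K * rsum J (ysq x).
Proof. destruct (lV_bound N V HN Hsym Hpd) as [m [K0 [HK0 Hb]]]. destruct (Lpq m) as [G [HG HG']].
  exists (2 * m + 1)%nat, (K0 * G). split. apply Rmult_le_pos; auto.
  intros x [Hq Hp]. unfold dot2.
  pose proof (Hb _ Hq). pose proof (Hb _ Hp). specialize (HG' x).
  rewrite rsum_plus in HG'.
  assert (K0 * (rsum m (fun k => dot N (fst x) (VE (S k)) * dot N (fst x) (VE (S k))) + rsum m (fun k => dot N (snd x) (VE (S k)) * dot N (snd x) (VE (S k)))) <= K0 * (G * rsum (2 * m + 1) (ysq x))).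
  { apply Rmult_le_compat_l; auto. }
  lra. Qed.

Definition KV := rsum N (fun i => rsum N (fun j => V i j * V i j)).

Lemma KV_nn : 0 <= KV.
Proof. apply rsum_nonneg; intros; apply rsum_nonneg; intros; apply sq_nn. Qed.

Lemma mv_bound x : dot N (matvec N V x) (matvec N V x) <= KV * dot N x x.
Proof. unfold KV. rewrite Rmult_comm, <- rsum_scal. unfold dot at 1. apply rsum_le. intros i Hi.
  rewrite (Rmult_comm (dot N x x)). unfold matvec, dot. apply rsum_CS. Qed.

Lemma qVq_bound x : dot N x (matvec N V x) <= / 2 * (1 + KV) * dot N x x.
Proof. assert (dot N x (matvec N V x) <= / 2 * (dot N x x + dot N (matvec N V x) (matvec N V x))).
  { unfold dot. rewrite <- rsum_plus, <- rsum_scal. apply rsum_le. intros. pose proof (sq_nn (x i - matvec N V x i)). lra. }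
  pose proof (mv_bound x). lra. Qed.

Lemma Ham_bound x : Ham N V x <= (1 + KV) * dot2 N x x.
Proof. unfold Ham, dot2. pose proof (qVq_bound (fst x)). pose proof KV_nn.
  pose proof (dot_nonneg N (fst x)). pose proof (dot_nonneg N (snd x)). nra. Qed.

Definition KA := 1 + 2 * KV + 2 * (alpha * alpha).

Lemma KA_ge1 : 1 <= KA.
Proof. unfold KA. pose proof KV_nn. pose proof (sq_nn alpha). lra. Qed.

Lemma p0_bound x : x 0%nat * x 0%nat <= dot N x x.
Proof. unfold dot. apply (rsum_term_le N (fun i => x i * x i)). intros; apply sq_nn. lia. Qed.

Lemma A_bound x : dot2 N (A x) (A x) <= KA * dot2 N x x.
Proof. unfold dot2. simpl.
  set (c := alpha * snd x 0%nat).
  assert (dot N (fun i => - matvec N V (fst x) i - (if Nat.eqb i 0 then c else 0)) (fun i => - matvec N V (fst x) i - (if Nat.eqb i 0 then c else 0))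
     <= 2 * dot N (matvec N V (fst x)) (matvec N V (fst x)) + 2 * (c * c)).
  { unfold dot. rewrite <- (rsum_delta N 0 (fun _ => c * c)) by lia. rewrite <- rsum_scal, <- rsum_scal, <- rsum_plus.
    apply rsum_le. intros i Hi. destruct (Nat.eqb i 0); pose proof (sq_sum2 (- matvec N V (fst x) i) (- c)); pose proof (sq_nn (matvec N V (fst x) i)); nra. }
  pose proof (mv_bound (fst x)). pose proof (p0_bound (snd x)).
  assert (c * c <= alpha * alpha * dot N (snd x) (snd x)).
  { unfold c. replace (alpha * snd x 0%nat * (alpha * snd x 0%nat)) with (alpha * alpha * (snd x 0%nat * snd x 0%nat)) by ring.
    apply Rmult_le_compat_l; auto. apply sq_nn. }
  unfold KA. pose proof KV_nn. pose proof (dot_nonneg N (fst x)). pose proof (dot_nonneg N (snd x)). pose proof (sq_nn alpha). nra. Qed.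

Lemma Apow_bound j x : dot2 N (Apow N V alpha j x) (Apow N V alpha j x) <= KA ^ j * dot2 N x x.
Proof. induction j.
  - simpl. lra.
  - rewrite Apow_S. eapply Rle_trans. apply A_bound. simpl. pose proof KA_ge1. nra. Qed.

Lemma W_bound J x : rsum J (fun j => Ham N V (Apow N V alpha j x)) <= ((1 + KV) * rsum J (fun j => KA ^ j)) * dot2 N x x.
Proof. rewrite Rmult_assoc, (Rmult_comm (rsum J _)), <- rsum_scal, <- rsum_scal. apply rsum_le. intros j _.
  eapply Rle_trans. apply Ham_bound. pose proof KV_nn.
  assert (dot2 N (Apow N V alpha j x) (Apow N V alpha j x) <= KA ^ j * dot2 N x x) by apply Apow_bound. nra. Qed.

Lemma ysq_Ham j x : ysq x j <= 2 * Ham N V (Apow N V alpha j x).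
Proof. unfold ysq, yv, Ham. pose proof (p0_bound (snd (Apow N V alpha j x))).
  pose proof (pd_nonneg N V (fst (Apow N V alpha j x)) Hpd). lra. Qed.

Lemma Ham_nonneg x : 0 <= Ham N V x.
Proof. unfold Ham. pose proof (pd_nonneg N V (fst x) Hpd). pose proof (dot_nonneg N (snd x)). lra. Qed.

End Obs.

From Coquelicot Require Import Coquelicot.

Lemma ps_of_cv (c : nat -> R) t l :
  Un_cv (fun n => sum_f_R0 (fun k => t ^ k / INR (Factorial.fact k) * c k) n) l ->
  is_pseries (fun k => c k / INR (Factorial.fact k)) t l.
Proof. intros H. unfold is_pseries. apply is_series_Reals. intros eps Heps.
  destruct (H eps Heps) as [M HM]. exists M. intros n Hn.
  rewrite (sum_eq _ (fun k => t ^ k / INR (Factorial.fact k) * c k)). apply HM; auto.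
  intros i _. rewrite pow_n_pow. change (scal (t ^ i) (c i / INR (Factorial.fact i))) with (t ^ i * (c i / INR (Factorial.fact i))).
  field. apply INR_fact_neq_0. Qed.

Lemma ps_lin (a b : nat -> R) (t la lb c1 c2 : R) : is_pseries a t la -> is_pseries b t lb ->
  is_pseries (fun k => c1 * a k + c2 * b k) t (c1 * la + c2 * lb).
Proof. intros Ha Hb.
  apply (is_pseries_scal c1) in Ha; [|apply Rmult_comm]. apply (is_pseries_scal c2) in Hb; [|apply Rmult_comm].
  pose proof (is_pseries_plus _ _ _ _ _ Ha Hb) as H. eapply is_pseries_ext; [|exact H].
  intros; reflexivity. Qed.

Lemma ps_ext (a b : nat -> R) (t l l' : R) : (forall k, a k = b k) -> l = l' -> is_pseries a t l -> is_pseries b t l'.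
Proof. intros H1 H2 H. subst. eapply is_pseries_ext; [|exact H]. auto. Qed.

Lemma ps_uniq (a : nat -> R) (t l l' : R) : is_pseries a t l -> is_pseries a t l' -> l = l'.
Proof. intros H1 H2. apply is_pseries_unique in H1. apply is_pseries_unique in H2. congruence. Qed.

Lemma ps_rsum n (c : nat -> R) (b : nat -> nat -> R) (t : R) (l : nat -> R) : (forall j, (j < n)%nat -> is_pseries (b j) t (l j)) ->
  is_pseries (fun k => rsum n (fun j => c j * b j k)) t (rsum n (fun j => c j * l j)).
Proof. induction n; intros H; simpl.
  - apply ps_ext with (fun k => 0 / INR (Factorial.fact k)) 0. intros; unfold Rdiv; ring. auto.
    apply ps_of_cv. intros eps Heps. exists 0%nat. intros. rewrite (sum_eq _ (fun _ => 0)). rewrite sum_cte. unfold Rdist. rewrite Rmult_0_l, Rminus_0_r, Rabs_R0. auto. intros; ring.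
  - apply ps_ext with (fun k => 1 * rsum n (fun j => c j * b j k) + c n * b n k) (1 * rsum n (fun j => c j * l j) + c n * l n).
    intros; ring. ring. apply ps_lin. apply IHn; intros; apply H; lia. apply H; lia. Qed.

Lemma radius_ge (a : nat -> R) (x : R) : ex_pseries a x -> Rbar_le (Rabs x) (CV_radius a).
Proof. intros H. apply Rbar_not_lt_le. intros Hlt. apply (CV_disk_outside a x Hlt).
  apply ex_series_lim_0 in H. apply is_lim_seq_ext with (2 := H). intros n. simpl.
  rewrite pow_n_pow. change (scal (x ^ n) (a n)) with (x ^ n * a n). ring. Qed.

Lemma der_const (c t : R) : is_derive (fun _ => c) t 0.
Proof. apply (is_derive_const c t). Qed.

Lemma der_plus (f g : R -> R) (t a b : R) : is_derive f t a -> is_derive g t b -> is_derive (fun s => f s + g s) t (a + b).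
Proof. intros. apply (is_derive_plus f g); auto. Qed.

Lemma der_mult (f g : R -> R) (t a b : R) : is_derive f t a -> is_derive g t b -> is_derive (fun s => f s * g s) t (a * g t + f t * b).
Proof. intros. apply (is_derive_mult f g); auto. intros; apply Rmult_comm. Qed.

Lemma der_scal (f : R -> R) (t c a : R) : is_derive f t a -> is_derive (fun s => c * f s) t (c * a).
Proof. intros. apply is_derive_scal; auto. Qed.

Lemma der_eq (f : R -> R) (t a b : R) : a = b -> is_derive f t a -> is_derive f t b.
Proof. intros; subst; auto. Qed.

Lemma der_rsum n (f : nat -> R -> R) df t : (forall i, (i < n)%nat -> is_derive (f i) t (df i)) ->
  is_derive (fun s => rsum n (fun i => f i s)) t (rsum n df).
Proof. induction n; intros H; simpl. apply der_const. apply der_plus. apply IHn; intros; apply H; lia. apply H; lia. Qed.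

Lemma der_const_fun (f : R -> R) : (forall t, is_derive f t 0) -> forall t, f t = f 0.
Proof. intros H t. destruct (MVT_cor4 f (fun _ => 0) 0 (Rabs (t - 0))) with (b := t) as [c [Hc _]].
  intros; apply H. lra. lra. Qed.

Lemma der_decr (f df : R -> R) : (forall t, is_derive f t (df t)) -> (forall t, df t <= 0) -> forall t, t >= 0 -> f t <= f 0.
Proof. intros H Hd t Ht. destruct (MVT_cor4 f df 0 (Rabs (t - 0))) with (b := t) as [c [Hc _]].
  intros; apply H. lra. pose proof (Hd c). assert (df c * (t - 0) <= 0) by (apply Rmult_le_0_r; lra). lra. Qed.

Lemma gronwall (f df : R -> R) (k : R) : 0 < k -> (forall t, is_derive f t (df t)) -> (forall t, df t <= - k * f t) ->
  forall t, t >= 0 -> f t <= exp (- k * t) * f 0.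
Proof. intros Hk H Hd t Ht.
  set (g := fun s => exp (k * s) * f s).
  assert (Hg : forall s, is_derive g s (k * exp (k * s) * f s + exp (k * s) * df s)).
  { intros s. unfold g. apply (der_mult (fun s => exp (k * s)) f s); auto. auto_derive; auto. ring. }
  assert (Hgd : forall s, k * exp (k * s) * f s + exp (k * s) * df s <= 0).
  { intros s. pose proof (exp_pos (k * s)). specialize (Hd s).
    replace (k * exp (k * s) * f s + exp (k * s) * df s) with (exp (k * s) * (k * f s + df s)) by ring.
    apply Rmult_le_0_l; lra. }
  pose proof (der_decr g _ Hg Hgd t Ht). unfold g in H0. rewrite Rmult_0_r, exp_0, Rmult_1_l in H0.
  replace (f t) with (exp (- k * t) * (exp (k * t) * f t)).
  - apply Rmult_le_compat_l; auto. apply Rlt_le, exp_pos.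
  - rewrite <- Rmult_assoc, <- exp_plus. replace (- k * t + k * t) with 0 by ring. rewrite exp_0. ring. Qed.

Section Dyn.
Variable N : nat.
Variable V : nat -> nat -> R.
Variable alpha : R.
Variable E : R -> state -> state.
Hypothesis HN : (1 <= N)%nat.
Hypothesis Hsym : symmetric N V.
Hypothesis Hpd : pos_def N V.
Hypothesis Halpha : alpha > 0.
Hypothesis HE : forall t psi, is_expA N V alpha t psi (E t psi).

Notation A := (Aop N V alpha).
Notation Ap := (Apow N V alpha).

Definition aq psi i := fun k => fst (Ap k psi) i / INR (Factorial.fact k).
Definition ap psi i := fun k => snd (Ap k psi) i / INR (Factorial.fact k).

Lemma psq t psi i : (i < N)%nat -> is_pseries (aq psi i) t (fst (E t psi) i).
Proof. intros Hi. apply ps_of_cv. apply (HE t psi i Hi). Qed.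

Lemma psp t psi i : (i < N)%nat -> is_pseries (ap psi i) t (snd (E t psi) i).
Proof. intros Hi. apply ps_of_cv. apply (HE t psi i Hi). Qed.

Lemma Apow_Sr k psi : Ap k (A psi) = A (Ap k psi).
Proof. change (A psi) with (Ap 1%nat psi). rewrite Apow_add. rewrite Nat.add_1_r. reflexivity. Qed.

Lemma rad_lt (a : nat -> R) t : (forall s, exists l, is_pseries a s l) -> Rbar_lt (Rabs t) (CV_radius a).
Proof. intros H. destruct (H (Rabs t + 1)) as [l Hl].
  assert (Rbar_le (Rabs (Rabs t + 1)) (CV_radius a)) by (apply radius_ge; exists l; auto).
  rewrite (Rabs_pos_eq (Rabs t + 1)) in H0 by (pose proof (Rabs_pos t); lra).
  destruct (CV_radius a); simpl in *; auto. lra. Qed.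

Lemma PSd k (c : nat -> R) : PS_derive (fun k => c k / INR (Factorial.fact k)) k = c (S k) / INR (Factorial.fact k).
Proof. unfold PS_derive. rewrite fact_simpl, mult_INR. field. split. apply INR_fact_neq_0. apply not_0_INR. lia. Qed.

Lemma der_E_gen (c : nat -> nat -> R) (f : R -> R) (g : R -> R) :
  (forall t, is_pseries (fun k => c 0%nat k / INR (Factorial.fact k)) t (f t)) ->
  (forall t, is_pseries (fun k => c 0%nat (S k) / INR (Factorial.fact k)) t (g t)) ->
  forall t, is_derive f t (g t).
Proof. intros Hf Hg t.
  assert (Hr : Rbar_lt (Rabs t) (CV_radius (fun k => c 0%nat k / INR (Factorial.fact k)))).
  { apply rad_lt. intros s; exists (f s); auto. }
  pose proof (is_derive_PSeries _ t Hr) as D.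
  rewrite (PSeries_ext _ (fun k => c 0%nat (S k) / INR (Factorial.fact k))) in D by (intros; apply PSd).
  rewrite (is_pseries_unique _ _ _ (Hg t)) in D.
  eapply is_derive_ext; [|exact D]. intros s. apply is_pseries_unique. auto. Qed.

Lemma der_q psi i t : (i < N)%nat -> is_derive (fun s => fst (E s psi) i) t (fst (E t (A psi)) i).
Proof. intros Hi. apply (der_E_gen (fun _ k => fst (Ap k psi) i) (fun s => fst (E s psi) i) (fun s => fst (E s (A psi)) i)).
  - intros; apply psq; auto.
  - intros s. apply ps_ext with (aq (A psi) i) (fst (E s (A psi)) i); auto. intros k. unfold aq. rewrite Apow_Sr. auto.
    apply psq; auto. Qed.

Lemma der_p psi i t : (i < N)%nat -> is_derive (fun s => snd (E s psi) i) t (snd (E t (A psi)) i).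
Proof. intros Hi. apply (der_E_gen (fun _ k => snd (Ap k psi) i) (fun s => snd (E s psi) i) (fun s => snd (E s (A psi)) i)).
  - intros; apply psp; auto.
  - intros s. apply ps_ext with (ap (A psi) i) (snd (E s (A psi)) i); auto. intros k. unfold ap. rewrite Apow_Sr. auto.
    apply psp; auto. Qed.

Lemma EA t psi : st_eq N (E t (A psi)) (A (E t psi)).
Proof. intros i Hi. split.
  - simpl. apply (ps_uniq (ap psi i) t). 2: apply psp; auto.
    apply ps_ext with (aq (A psi) i) (fst (E t (A psi)) i); auto. intros k. unfold aq, ap. rewrite Apow_Sr. auto. apply psq; auto.
  - apply (ps_uniq (ap (A psi) i) t). apply psp; auto.
    set (d := if Nat.eqb i 0 then alpha else 0).
    apply ps_ext with (fun k => (-1) * rsum N (fun j => V i j * aq psi j k) + (- d) * ap psi 0%nat k)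
       ((-1) * rsum N (fun j => V i j * fst (E t psi) j) + (- d) * snd (E t psi) 0%nat).
    + intros k. unfold aq, ap. rewrite Apow_Sr.
      rewrite (rsum_ext N (fun j => V i j * (fst (Ap k psi) j / INR (Factorial.fact k))) (fun j => / INR (Factorial.fact k) * (V i j * fst (Ap k psi) j))) by (intros; unfold Rdiv; ring).
      rewrite rsum_scal. simpl. unfold matvec, d. pose proof (INR_fact_neq_0 k).
      destruct (Nat.eqb i 0); field; auto.
    + simpl. unfold matvec, d. destruct (Nat.eqb i 0); ring.
    + apply ps_lin. apply ps_rsum. intros; apply psq; auto. apply psp; lia. Qed.

Lemma st_eq_sym x y : st_eq N x y -> st_eq N y x.
Proof. intros H i Hi. destruct (H i Hi); split; auto. Qed.

Lemma st_eq_trans x y z : st_eq N x y -> st_eq N y z -> st_eq N x z.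
Proof. intros H1 H2 i Hi. destruct (H1 i Hi), (H2 i Hi); split; congruence. Qed.

Lemma E0 psi : st_eq N (E 0 psi) psi.
Proof. intros i Hi. split.
  - pose proof (psq 0 psi i Hi). apply is_pseries_unique in H. rewrite PSeries_0 in H. unfold aq in H. simpl in H. lra.
  - pose proof (psp 0 psi i Hi). apply is_pseries_unique in H. rewrite PSeries_0 in H. unfold ap in H. simpl in H. lra. Qed.

Lemma EApow j t psi : st_eq N (E t (Ap j psi)) (Ap j (E t psi)).
Proof. induction j.
  - apply st_eq_refl.
  - rewrite !Apow_S. eapply st_eq_trans. apply EA. apply Aop_ext; auto. Qed.

Lemma E_orth psi phi t : (forall k, dot2 N (Ap k psi) phi = 0) -> dot2 N (E t psi) phi = 0.
Proof. intros H.
  assert (H1 : is_pseries (fun k => 1 * rsum N (fun i => fst phi i * aq psi i k) + 1 * rsum N (fun i => snd phi i * ap psi i k)) t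
     (1 * rsum N (fun i => fst phi i * fst (E t psi) i) + 1 * rsum N (fun i => snd phi i * snd (E t psi) i))).
  { apply ps_lin; apply ps_rsum; intros; [apply psq|apply psp]; auto. }
  assert (H0 : is_pseries (fun k => 1 * rsum N (fun i => fst phi i * aq psi i k) + 1 * rsum N (fun i => snd phi i * ap psi i k)) t
     (rsum 0 (fun j => 1 * 1))).
  { apply ps_ext with (fun k => rsum 0 (fun j => 1 * (fun (_ : nat) (_ : nat) => 0) j k)) (rsum 0 (fun j => 1 * 1)); auto.
    - intros k. simpl. specialize (H k). unfold dot2, dot in H. unfold aq, ap.
      rewrite (rsum_ext N _ (fun i => / INR (Factorial.fact k) * (fst (Ap k psi) i * fst phi i))) by (intros; unfold Rdiv; ring).
      rewrite (rsum_ext N (fun i => snd phi i * _) (fun i => / INR (Factorial.fact k) * (snd (Ap k psi) i * snd phi i))) by (intros; unfold Rdiv; ring).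
      rewrite !rsum_scal. rewrite Rmult_1_l, Rmult_1_l, <- Rmult_plus_distr_l, H. ring.
    - apply ps_rsum. intros; lia. }
  pose proof (ps_uniq _ _ _ _ H1 H0). simpl in H2. unfold dot2, dot.
  rewrite (rsum_ext N (fun i => fst (E t psi) i * fst phi i) (fun i => fst phi i * fst (E t psi) i)) by (intros; ring).
  rewrite (rsum_ext N (fun i => snd (E t psi) i * snd phi i) (fun i => snd phi i * snd (E t psi) i)) by (intros; ring).
  lra. Qed.

Definition Traj (X : R -> state) := forall t i, (i < N)%nat ->
  is_derive (fun s => fst (X s) i) t (fst (A (X t)) i) /\ is_derive (fun s => snd (X s) i) t (snd (A (X t)) i).

Lemma traj_E psi : Traj (fun s => E s psi).
Proof. intros t i Hi. destruct (EA t psi i Hi) as [H1 H2]. split.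
  - rewrite <- H1. apply der_q; auto.
  - rewrite <- H2. apply der_p; auto. Qed.

Lemma B_deriv X Y : Traj X -> Traj Y -> forall t,
  is_derive (fun s => Bf N V (X s) (Y s)) t (-2 * alpha * snd (X t) 0%nat * snd (Y t) 0%nat).
Proof. intros HX HY t.
  apply der_eq with (Bf N V (A (X t)) (Y t) + Bf N V (X t) (A (Y t))). { apply B_A; auto. }
  unfold Bf, dot.
  eapply der_eq; [| apply der_plus; [apply (der_rsum N (fun i s => snd (X s) i * snd (Y s) i) (fun i => snd (A (X t)) i * snd (Y t) i + snd (X t) i * snd (A (Y t)) i)) | apply (der_rsum N (fun i s => fst (X s) i * matvec N V (fst (Y s)) i) (fun i => fst (A (X t)) i * matvec N V (fst (Y t)) i + fst (X t) i * matvec N V (fst (A (Y t))) i))]].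
  - rewrite !rsum_plus. ring.
  - intros i Hi. apply der_mult; [apply HX | apply HY]; auto.
  - intros i Hi. apply der_mult. apply HX; auto. unfold matvec.
    apply (der_rsum N (fun j s => V i j * fst (Y s) j) (fun j => V i j * fst (A (Y t)) j)).
    intros j Hj. apply der_scal. apply HY; auto. Qed.

Lemma Ham_ext x y : st_eq N x y -> Ham N V x = Ham N V y.
Proof. intros H. rewrite !Ham_B. rewrite (B_ext N V x y x y); auto. Qed.

Lemma Lminus_Apow k psi : in_Lminus N V psi -> in_Lminus N V (Ap k psi).
Proof. induction k; intros H; auto. rewrite Apow_S. apply Lminus_A; auto. Qed.

Lemma L0_Apow k psi : in_L0 N V psi -> in_L0 N V (Ap k psi).
Proof. induction k; intros H; auto. rewrite Apow_S. apply L0_A; auto. Qed.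

Lemma dot_zero_r x : dot N x (fun _ => 0) = 0.
Proof. unfold dot. apply rsum_zero. intros; ring. Qed.

Lemma perp_lV x : (forall w, (forall u, in_lV N V u -> dot N w u = 0) -> dot N x w = 0) -> in_lV N V x.
Proof. intros H. destruct (lV_decomp N V HN x) as [y [z [Hy [Hz Hxyz]]]].
  assert (Hxz := H z Hz).
  rewrite (dot_ext N x (fun i => y i + z i) z z) in Hxz by auto.
  rewrite dot_plus_l, dot_comm, Hz in Hxz by auto.
  assert (Hz0 := dot_zero N z ltac:(lra)).
  apply (lV_ext N V y); auto. intros i Hi. rewrite Hxyz, Hz0 by auto. ring. Qed.

Lemma E_Lminus t psi : in_Lminus N V psi -> in_Lminus N V (E t psi).
Proof. intros Hpsi. split.
  - apply perp_lV. intros w Hw.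
    assert (dot2 N (E t psi) (w, fun _ => 0) = 0).
    { apply E_orth. intros k. destruct (Lminus_Apow k psi Hpsi) as [H1 H2]. unfold dot2. simpl.
      rewrite dot_zero_r, dot_comm, Hw; auto. ring. }
    unfold dot2 in H. simpl in H. rewrite dot_zero_r in H. lra.
  - apply perp_lV. intros w Hw.
    assert (dot2 N (E t psi) (fun _ => 0, w) = 0).
    { apply E_orth. intros k. destruct (Lminus_Apow k psi Hpsi) as [H1 H2]. unfold dot2. simpl.
      rewrite dot_zero_r, (dot_comm N _ w), Hw; auto. ring. }
    unfold dot2 in H. simpl in H. rewrite dot_zero_r in H. lra. Qed.

Lemma E_L0 t phi : in_L0 N V phi -> in_L0 N V (E t phi).
Proof. intros Hphi w Hw. apply E_orth. intros k. apply L0_Apow; auto. Qed.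

End Dyn.

Section Final.
Variable N : nat.
Variable V : nat -> nat -> R.
Variable alpha : R.
Variable E : R -> state -> state.
Hypothesis HN : (1 <= N)%nat.
Hypothesis Hsym : symmetric N V.
Hypothesis Hpd : pos_def N V.
Hypothesis Halpha : alpha > 0.
Hypothesis HE : forall t psi, is_expA N V alpha t psi (E t psi).

Notation A := (Aop N V alpha).
Notation Ap := (Apow N V alpha).

Lemma Ham_deriv psi t : is_derive (fun s => Ham N V (E s psi)) t (- alpha * (snd (E t psi) 0%nat * snd (E t psi) 0%nat)).
Proof. eapply is_derive_ext. intros s. symmetry. apply Ham_B.
  apply der_eq with (/ 2 * (-2 * alpha * snd (E t psi) 0%nat * snd (E t psi) 0%nat)). field.
  apply der_scal. apply (B_deriv N V alpha HN Hsym (fun s => E s psi) (fun s => E s psi)); apply (traj_E N V alpha E HN HE). Qed.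

Lemma decay_sq : exists M k, 0 <= M /\ 0 < k /\ forall t psi, t >= 0 -> in_Lminus N V psi ->
  dot2 N (E t psi) (E t psi) <= M * exp (- k * t) * dot2 N psi psi.
Proof. destruct (obs_bound N V alpha HN Hsym Hpd) as [J [K1 [HK1 Hob]]].
  set (KW := (1 + KV N V) * rsum J (fun j => KA N V alpha ^ j)).
  assert (HKW : 0 <= KW).
  { unfold KW. apply Rmult_le_pos. pose proof (KV_nn N V). lra. apply rsum_nonneg. intros. apply pow_le.
    pose proof (KA_ge1 N V alpha). lra. }
  set (k := alpha / ((KW + 1) * (K1 + 1))).
  assert (Hk : 0 < k). { unfold k. apply Rdiv_lt_0_compat; auto. apply Rmult_lt_0_compat; lra. }
  exists (2 * K1 * KW), k. split. { apply Rmult_le_pos; lra. } split; auto.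
  intros t psi Ht Hpsi.
  set (W := fun s => rsum J (fun j => Ham N V (E s (Ap j psi)))).
  set (dW := fun s => rsum J (fun j => - alpha * (snd (E s (Ap j psi)) 0%nat * snd (E s (Ap j psi)) 0%nat))).
  assert (HW : forall s, is_derive W s (dW s)).
  { intros s. unfold W, dW. apply (der_rsum J (fun j s => Ham N V (E s (Ap j psi)))). intros; apply Ham_deriv. }
  assert (Wx : forall s, W s = rsum J (fun j => Ham N V (Ap j (E s psi)))).
  { intros s. unfold W. apply rsum_ext. intros j _. apply Ham_ext. apply (EApow N V alpha E HN HE). }
  assert (dWx : forall s, dW s = - alpha * rsum J (ysq N V alpha (E s psi))).
  { intros s. unfold dW. rewrite <- rsum_scal. apply rsum_ext. intros j _. unfold ysq, yv.
    destruct (EApow N V alpha E HN HE j s psi 0%nat ltac:(lia)) as [_ H]. rewrite H. ring. }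
  assert (Hdec : forall s, dW s <= - k * W s).
  { intros s. rewrite dWx, Wx. pose proof (E_Lminus N V alpha E HN HE s psi Hpsi) as Hx.
    pose proof (Hob _ Hx). pose proof (W_bound N V alpha HN J (E s psi)). fold KW in H0.
    assert (0 <= rsum J (ysq N V alpha (E s psi))) by (apply rsum_nonneg; intros; apply ysq_nn).
    assert (0 <= dot2 N (E s psi) (E s psi)) by (unfold dot2; pose proof (dot_nonneg N (fst (E s psi))); pose proof (dot_nonneg N (snd (E s psi))); lra).
    set (Y := rsum J (ysq N V alpha (E s psi))) in *.
    set (Wv := rsum J (fun j => Ham N V (Ap j (E s psi)))) in *.
    assert (Wv <= (KW + 1) * (K1 + 1) * Y).
    { assert (dot2 N (E s psi) (E s psi) <= (K1 + 1) * Y) by nra. nra. }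
    unfold k. assert (0 < (KW + 1) * (K1 + 1)) by (apply Rmult_lt_0_compat; lra).
    assert (alpha / ((KW + 1) * (K1 + 1)) * Wv <= alpha * Y).
    { unfold Rdiv. rewrite Rmult_assoc. apply Rmult_le_compat_l; [lra|].
      apply Rmult_le_reg_l with ((KW + 1) * (K1 + 1)); auto. rewrite <- Rmult_assoc, Rinv_r by lra. lra. }
    lra. }
  pose proof (gronwall W dW k Hk HW Hdec t Ht) as Hg.
  assert (W0 : W 0 <= KW * dot2 N psi psi).
  { unfold W. rewrite (rsum_ext J _ (fun j => Ham N V (Ap j psi))).
    - apply W_bound; auto.
    - intros j _. apply Ham_ext. apply (E0 N V alpha E HE). }
  pose proof (Hob _ (E_Lminus N V alpha E HN HE t psi Hpsi)).
  assert (rsum J (ysq N V alpha (E t psi)) <= 2 * W t).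
  { rewrite Wx. rewrite <- rsum_scal. apply rsum_le. intros; apply ysq_Ham; auto. }
  pose proof (exp_pos (- k * t)).
  assert (W t <= exp (- k * t) * (KW * dot2 N psi psi)) by (eapply Rle_trans; [apply Hg|]; apply Rmult_le_compat_l; lra).
  assert (K1 * rsum J (ysq N V alpha (E t psi)) <= K1 * (2 * W t)) by (apply Rmult_le_compat_l; auto).
  assert (K1 * (2 * W t) <= K1 * (2 * (exp (- k * t) * (KW * dot2 N psi psi)))) by (apply Rmult_le_compat_l; lra).
  lra. Qed.


Lemma dot2_nonneg x : 0 <= dot2 N x x.
Proof. unfold dot2. pose proof (dot_nonneg N (fst x)). pose proof (dot_nonneg N (snd x)). lra. Qed.

Lemma part2b : exists C c, c > 0 /\ forall t psi, t >= 0 -> in_Lminus N V psi ->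
       norm2 N (E t psi) <= C * exp (- c * t) * norm2 N psi.
Proof. destruct decay_sq as [M [k [HM [Hk Hd]]]]. exists (sqrt M), (k / 2). split. lra.
  intros t psi Ht Hpsi. unfold norm2.
  set (e := exp (- (k / 2) * t)).
  assert (He : 0 <= e) by (apply Rlt_le, exp_pos).
  assert (exp (- k * t) = e * e) by (unfold e; rewrite <- exp_plus; f_equal; field).
  specialize (Hd t psi Ht Hpsi). rewrite H in Hd.
  eapply Rle_trans. apply sqrt_le_1_alt. apply Hd.
  pose proof (dot2_nonneg psi).
  assert (0 <= e * e) by apply sq_nn.
  rewrite (sqrt_mult (M * (e * e)) (dot2 N psi psi)) by (try apply Rmult_le_pos; auto).
  rewrite (sqrt_mult M (e * e)) by auto. rewrite sqrt_square by auto. lra. Qed.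

Lemma part2c_fwd psi : in_Lminus N V psi -> tends_to_0_at_infty (fun t => Ham N V (E t psi)).
Proof. intros Hpsi. destruct decay_sq as [M [k [HM [Hk Hd]]]].
  set (B := (1 + KV N V) * M * dot2 N psi psi + 1).
  assert (HB : 1 <= B). { unfold B. pose proof (KV_nn N V). pose proof (dot2_nonneg psi). assert (0 <= (1 + KV N V) * M) by (apply Rmult_le_pos; lra). nra. }
  intros eps Heps. exists (Rmax 0 (- ln (eps / B) / k + 1)). intros t Ht.
  assert (Ht0 : t >= 0) by (pose proof (Rmax_l 0 (- ln (eps / B) / k + 1)); lra).
  assert (Ht1 : t >= - ln (eps / B) / k + 1) by (pose proof (Rmax_r 0 (- ln (eps / B) / k + 1)); lra).
  rewrite Rabs_pos_eq by (apply Ham_nonneg; auto).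
  assert (Hexp : exp (- k * t) < eps / B).
  { rewrite <- (exp_ln (eps / B)) by (apply Rdiv_lt_0_compat; lra). apply exp_increasing.
    assert (k * t >= k * (- ln (eps / B) / k + 1)) by (apply Rmult_ge_compat_l; lra).
    replace (k * (- ln (eps / B) / k + 1)) with (- ln (eps / B) + k) in H by (field; lra). lra. }
  pose proof (Ham_bound N V (E t psi)). pose proof (Hd t psi Ht0 Hpsi). pose proof (exp_pos (- k * t)).
  pose proof (KV_nn N V). pose proof (dot2_nonneg psi).
  assert (Ham N V (E t psi) <= (B - 1) * exp (- k * t)).
  { eapply Rle_trans. apply H. unfold B. replace ((1 + KV N V) * M * dot2 N psi psi + 1 - 1) with ((1 + KV N V) * (M * dot2 N psi psi)) by ring.
    replace ((1 + KV N V) * (M * dot2 N psi psi) * exp (- k * t)) with ((1 + KV N V) * (M * exp (- k * t) * dot2 N psi psi)) by ring.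
    apply Rmult_le_compat_l; lra. }
  assert (B * exp (- k * t) < eps).
  { apply Rmult_lt_compat_l with (r := B) in Hexp; [|lra]. replace (B * (eps / B)) with eps in Hexp by (field; lra). lra. }
  lra. Qed.

Lemma part2c_bwd psi : tends_to_0_at_infty (fun t => Ham N V (E t psi)) -> in_Lminus N V psi.
Proof. intros Ht.
  destruct (lV_decomp N V HN (fst psi)) as [yq [zq [Hyq [Hzq Eq]]]].
  destruct (lV_decomp N V HN (snd psi)) as [yp [zp [Hyp [Hzp Ep]]]].
  set (phi := (zq, zp)).
  assert (Hphi : in_L0 N V phi).
  { intros w [Hw1 Hw2]. unfold dot2, phi. simpl. rewrite Hzq, Hzp by auto. ring. }
  assert (Hsnd0 : forall t, snd (E t phi) 0%nat = 0).
  { intros t. pose proof (E_L0 N V alpha E HN Hsym HE t phi Hphi (fun _ => 0, e1)).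
    assert (in_Lminus N V (fun _ => 0, e1)) by (split; simpl; [apply lV_zero| apply lV_e1; auto]).
    specialize (H H0). unfold dot2 in H. simpl in H. rewrite dot_zero_r, dot_e1 in H by auto. lra. }
  assert (Hc : forall t, Bf N V (E t psi) (E t phi) = Bf N V psi phi).
  { intros t. pose proof (der_const_fun (fun s => Bf N V (E s psi) (E s phi))) as Hcf.
    rewrite Hcf. apply B_ext; apply (E0 N V alpha E HE).
    intros s. eapply der_eq; [| apply (B_deriv N V alpha HN Hsym (fun s => E s psi) (fun s => E s phi)); apply (traj_E N V alpha E HN HE)].
    rewrite Hsnd0. ring. }
  assert (Hc2 : forall t, Bf N V (E t phi) (E t phi) = Bf N V phi phi).
  { intros t. pose proof (der_const_fun (fun s => Bf N V (E s phi) (E s phi))) as Hcf.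
    rewrite Hcf. apply B_ext; apply (E0 N V alpha E HE).
    intros s. eapply der_eq; [| apply (B_deriv N V alpha HN Hsym (fun s => E s phi) (fun s => E s phi)); apply (traj_E N V alpha E HN HE)].
    rewrite Hsnd0. ring. }
  assert (HB0 : Bf N V psi phi = 0).
  { set (b := Bf N V phi phi). set (s := Bf N V psi phi * Bf N V psi phi).
    assert (Hb : 0 <= b) by (apply B_nonneg; auto). assert (Hs : 0 <= s) by apply sq_nn.
    destruct (Rle_lt_or_eq_dec 0 s Hs) as [Hs'|Hs'].
    - exfalso. destruct (Ht (s / (4 * b + 4))) as [T HT]. { apply Rdiv_lt_0_compat; lra. }
      specialize (HT T (Rge_refl T)). rewrite Rabs_pos_eq in HT by (apply Ham_nonneg; auto).
      pose proof (B_CS N V Hsym Hpd (E T psi) (E T phi)). rewrite Hc, Hc2 in H. fold b s in H.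
      rewrite Ham_B in HT.
      assert (Bf N V (E T psi) (E T psi) < 2 * (s / (4 * b + 4))) by lra.
      pose proof (B_nonneg N V Hpd (E T psi)).
      assert (s <= 2 * (s / (4 * b + 4)) * b) by nra.
      assert (2 * (s / (4 * b + 4)) * b < s).
      { replace (2 * (s / (4 * b + 4)) * b) with (s * (2 * b / (4 * b + 4))) by (field; lra).
        assert (2 * b / (4 * b + 4) < 1). { apply (Rmult_lt_reg_r (4 * b + 4)); [lra|]. unfold Rdiv. rewrite Rmult_assoc, Rinv_l by lra. lra. }
        nra. }
      lra.
    - assert (Bf N V psi phi * Bf N V psi phi = 0) by (unfold s in Hs'; lra). apply Rmult_integral in H. tauto. }
  unfold Bf, phi in HB0. simpl in HB0.
  assert (E1 : dot N (snd psi) zp = dot N zp zp).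
  { rewrite (dot_ext N (snd psi) (fun i => yp i + zp i) zp zp) by auto. rewrite dot_plus_l, dot_comm, Hzp by auto. ring. }
  assert (E2 : dot N (fst psi) (matvec N V zq) = dot N zq (matvec N V zq)).
  { rewrite (dot_ext N (fst psi) (fun i => yq i + zq i) (matvec N V zq) (matvec N V zq)) by auto.
    rewrite dot_plus_l. rewrite matvec_sym by auto. rewrite dot_comm, Hzq. ring. apply lV_V; auto. }
  rewrite E1, E2 in HB0. pose proof (dot_nonneg N zp). pose proof (pd_nonneg N V zq Hpd).
  assert (Zp := dot_zero N zp ltac:(lra)). assert (Zq := pd_zero N V zq Hpd ltac:(lra)).
  split.
  - apply (lV_ext N V yq); auto. intros i Hi. rewrite Eq, Zq by auto. ring.
  - apply (lV_ext N V yp); auto. intros i Hi. rewrite Ep, Zp by auto. ring. Qed.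

End Final.

Theorem mainTheorem16 (N : nat) (V : nat -> nat -> R) (alpha : R)
  (E : R -> state -> state)
  (HN : (1 <= N)%nat)
  (Hsym : symmetric N V) (Hpd : pos_def N V) (Halpha : alpha > 0)
  (HE : forall t psi, is_expA N V alpha t psi (E t psi)) :
  (forall psi, in_Lminus N V psi -> in_Lminus N V (Aop N V alpha psi)) /\
  (forall psi, in_L0 N V psi -> in_L0 N V (Aop N V alpha psi)) /\
  (forall a b, eigenvalue_Aminus N V alpha a b -> a < 0) /\
  (exists C c, c > 0 /\
     forall t psi, t >= 0 -> in_Lminus N V psi ->
       norm2 N (E t psi) <= C * exp (- c * t) * norm2 N psi) /\
  (forall psi, in_Lminus N V psi <->
     tends_to_0_at_infty (fun t => Ham N V (E t psi))).
Proof.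
  split. { intros; apply Lminus_A; auto. }
  split. { intros; apply L0_A; auto. }
  split. { intros; eapply eig_neg; eauto. }
  split. { eapply part2b; eauto. }
  intros psi. split.
  - eapply part2c_fwd; eauto.
  - eapply part2c_bwd; eauto.
Qed.
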